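(* Let $L\in\mathrm{Gr}(\mathbb R^n,m)$ and let $(B,N)$ be its Goldman–Tucker partition. Then: (a) If $|||\cdot|||=\|\cdot\|_\infty$: $\sigma(L_B)=\nu(L_B)=\max_{x\in L\cap\mathbb R^n_+,\|x\|=1}\min_{i\in B}x_i$ and $\sigma(L_N)=\nu(L_N)=\max_{x\in L^\perp\cap\mathbb R^n_+,\|x\|=1}\min_{i\in N}x_i$. In particular, if also $\|\cdot\|=\|\cdot\|_1$: $\sigma(L_B)=\nu(L_B)=\max_{x\in L\cap\Delta_{n-1}}\min_{i\in B}x_i$ and $\sigma(L_N)=\nu(L_N)=\max_{x\in L^\perp\cap\Delta_{n-1}}\min_{i\in N}x_i$. (b) If $|||\cdot|||=\|\cdot\|_1$: $\sigma(L_B)=\nu(L_B)=\min_{i\in B}\max_{x\in L\cap\mathbb R^n_+,\|x\|=1}x_i$ and $\sigma(L_N)=\nu(L_N)=\min_{i\in N}\max_{x\in L^\perp\cap\mathbb R^n_+,\|x\|=1}x_i$. In particular, if also $\|\cdot\|=\|\cdot\|_1$: $\sigma(L_B)=\nu(L_B)=\min_{i\in B}\max_{x\in L\cap\Delta_{n-1}}x_i$ and $\sigma(L_N)=\nu(L_N)=\min_{i\in N}\max_{x\in L^\perp\cap\Delta_{n-1}}x_i$. (c) If $\|\cdot\|=|||\cdot|||=\|\cdot\|_2$: $\sigma(L_B)=\nu(L_B)=\min_{u\in\mathbb R^B_+\times\{0_N\},\|u\|_2=1}\max_{x\in L\cap\mathbb R^n_+,\|x\|_2=1}\langle u,x\rangle$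 and $\sigma(L_N)=\nu(L_N)=\min_{u\in\{0_B\}\times\mathbb R^N_+,\|u\|_2=1}\max_{x\in L^\perp\cap\mathbb R^n_+,\|x\|_2=1}\langle u,x\rangle$.
   Context: $V=\mathbb R^n$ with the dot product, $K=\mathbb R^n_+$; $\mathrm{Gr}(\mathbb R^n,m)$ is the set of $m$-dimensional subspaces ($1\le m<n$), $L^\perp$ the orthogonal complement; $\Delta_{n-1}:=\{x\in\mathbb R^n_+:\sum_ix_i=1\}$. For every $L\in\mathrm{Gr}(\mathbb R^n,m)$ there is a unique partition $B\cup N=\{1,\dots,n\}$ (the Goldman–Tucker partition) with $L\cap(\operatorname{int}\mathbb R^B_+\times\{0_N\})\neq\emptyset$ and $L^\perp\cap(\{0_B\}\times\operatorname{int}\mathbb R^N_+)\neq\emptyset$. Set $V_B:=\mathbb R^B\times\{0_N\}$, $K_B:=\mathbb R^B_+\times\{0_N\}$, $V_N:=\{0_B\}\times\mathbb R^N$, $K_N:=\{0_B\}\times\mathbb R^N_+$, $L_B:=L\cap V_B$, $L_N:=L^\perp\cap V_N$. For a coordinate subspace $V'\in\{V_B,V_N\}$ with cone $K'\in\{K_B,K_N\}$ and a subspace $L'\subseteq V'$ (with $L'\cap\operatorname{int}_{V'}K'\neq\emptyset$), the quantities are computed inside $V'$ (orthogonal complement, dual cone $K'^*=K'$, and norms restricted to $V'$, dual norms taken within $V'$): $\nu(L'):=\min\{\|u-y\|^*:u\in K',\ y\in L'^{\perp}\cap V',\ |||u|||^*=1\}$, and $\sigma(L'):=\min_{v\in K',|||v|||=1}\max_{x\in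 L',\|x\|\le1}\lambda_v(x)$ where $\lambda_v(x):=\sup\{t: x-tv\in K'\}$. Here $\|\cdot\|,|||\cdot|||$ are the specified norms on $\mathbb R^n$ and $\|u\|^*:=\max_{\|x\|=1}\langle u,x\rangle$, $|||u|||^*:=\max_{|||x|||=1}\langle u,x\rangle$. *)

(* Defs.v *)
From Stdlib Require Import Reals.
From mathcomp Require Import all_boot.

Set Implicit Arguments.
Unset Strict Implicit.
Unset Printing Implicit Defensive.

Local Open Scope R_scope.

Definition vec (n : nat) := 'I_n -> R.

Section Vec.
Variable n : nat.

Definition vzero : vec n := fun _ => 0.
Definition vadd (x y : vec n) : vec n := fun i => x i + y i.
Definition vsub (x y : vec n) : vec n := fun i => x i - y i.
Definition vscale (c : R) (x : vec n) : vec n := fun i => c * x i.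

Definition dot (x y : vec n) : R := \big[Rplus/0]_(i < n) (x i * y i).

Definition norm_inf (x : vec n) : R := \big[Rmax/0]_(i < n) Rabs (x i).
Definition norm_1 (x : vec n) : R := \big[Rplus/0]_(i < n) Rabs (x i).
Definition norm_2 (x : vec n) : R := sqrt (\big[Rplus/0]_(i < n) (x i * x i)).

Definition IsNorm (N : vec n -> R) : Prop :=
  (forall x, N x = 0 -> forall i, x i = 0) /\
  (forall c x, N (vscale c x) = Rabs c * N x) /\
  (forall x y, N (vadd x y) <= N x + N y).

Definition nonneg (x : vec n) : Prop := forall i, 0 <= x i.
Definition simplex (x : vec n) : Prop :=
  nonneg x /\ \big[Rplus/0]_(i < n) x i = 1.

Definition lincomb (m : nat) (c : 'I_m -> R) (b : 'I_m -> vec n) : vec n :=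
  fun i => \big[Rplus/0]_(j < m) (c j * b j i).

Definition InGr (L : vec n -> Prop) (m : nat) : Prop :=
  exists b : 'I_m -> vec n,
    (forall c : 'I_m -> R, (forall i, lincomb c b i = 0) -> forall j, c j = 0) /\
    (forall x, L x <-> exists c : 'I_m -> R, forall i, x i = lincomb c b i).

Definition perp (L : vec n -> Prop) : vec n -> Prop :=
  fun y => forall x, L x -> dot x y = 0.

Definition GoldmanTucker (L : vec n -> Prop) (B : 'I_n -> Prop) : Prop :=
  (exists x, L x /\ forall i, (B i -> 0 < x i) /\ (~ B i -> x i = 0)) /\
  (exists y, perp L y /\ forall i, (B i -> y i = 0) /\ (~ B i -> 0 < y i)).

(* coordinate subspaces and cones; for V_N, K_N use (fun i => ~ B i) *)
Definition Vcoord (B : 'I_n -> Prop) : vec n -> Prop :=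
  fun x => forall i, ~ B i -> x i = 0.
Definition Kcoord (B : 'I_n -> Prop) : vec n -> Prop :=
  fun x => Vcoord B x /\ forall i, B i -> 0 <= x i.

Definition compl (B : 'I_n -> Prop) : 'I_n -> Prop := fun i => ~ B i.

Definition LB (L : vec n -> Prop) (B : 'I_n -> Prop) : vec n -> Prop :=
  fun x => L x /\ Vcoord B x.
Definition LN (L : vec n -> Prop) (B : 'I_n -> Prop) : vec n -> Prop :=
  fun x => perp L x /\ Vcoord (compl B) x.

End Vec.

Definition IsMax (P : R -> Prop) (m : R) : Prop := P m /\ forall y, P y -> y <= m.
Definition IsMin (P : R -> Prop) (m : R) : Prop := P m /\ forall y, P y -> m <= y.

Section Quantities.
Variable n : nat.
(* V' : the ambient coordinate subspace, K' : its cone, L' : a subspace of V' *)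
Variables (V K Lp : vec n -> Prop).

Definition DualNormIs (N : vec n -> R) (u : vec n) (d : R) : Prop :=
  IsMax (fun a => exists x, V x /\ N x = 1 /\ a = dot u x) d.

Definition NuIs (Nn Nt : vec n -> R) (r : R) : Prop :=
  IsMin (fun a => exists u y,
            K u /\ V y /\ (forall x, Lp x -> dot x y = 0) /\
            DualNormIs Nt u 1 /\ DualNormIs Nn (vsub u y) a) r.

Definition LambdaIs (v x : vec n) (t : R) : Prop :=
  is_lub (fun s => K (vsub x (vscale s v))) t.

Definition SigmaIs (Nn Nt : vec n -> R) (r : R) : Prop :=
  IsMin (fun a => exists v, K v /\ Nt v = 1 /\
            IsMax (fun b => exists x, Lp x /\ Nn x <= 1 /\ LambdaIs v x b) a) r.

End Quantities.

(* Right-hand sides of the theorem, for a subspace M (L or L^⊥) and an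
   index set C (B or N). *)
Section RHS.
Variable n : nat.
Variables (M : vec n -> Prop) (C : 'I_n -> Prop).

Definition RhsMaxMin (Nn : vec n -> R) (r : R) : Prop :=
  IsMax (fun a => exists x, M x /\ nonneg x /\ Nn x = 1 /\
           IsMin (fun c => exists i, C i /\ c = x i) a) r.

Definition RhsMaxMinSimplex (r : R) : Prop :=
  IsMax (fun a => exists x, M x /\ simplex x /\
           IsMin (fun c => exists i, C i /\ c = x i) a) r.

Definition RhsMinMax (Nn : vec n -> R) (r : R) : Prop :=
  IsMin (fun a => exists i, C i /\
           IsMax (fun b => exists x, M x /\ nonneg x /\ Nn x = 1 /\ b = x i) a) r.

Definition RhsMinMaxSimplex (r : R) : Prop :=
  IsMin (fun a => exists i, C i /\
           IsMax (fun b => exists x, M x /\ simplex x /\ b = x i) a) r.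

Definition RhsL2 (r : R) : Prop :=
  IsMin (fun a => exists u, Kcoord C u /\ norm_2 u = 1 /\
           IsMax (fun b => exists x, M x /\ nonneg x /\ norm_2 x = 1 /\
                    b = dot u x) a) r.
End RHS.

(* Main.v *)
Require Import Defs.
From Stdlib Require Import Reals Lra Classical ClassicalEpsilon FunctionalExtensionality.
From mathcomp Require Import all_boot.
From mathcomp Require all_order all_algebra all_classical all_reals all_analysis Rstruct Rstruct_topology.

Module BridgeM.
Import all_order all_algebra all_classical all_reals all_analysis Rstruct Rstruct_topology.
Import Order.TTheory GRing.Theory Num.Theory.
Import numFieldNormedType.Exports.
Local Open Scope classical_set_scope.
Section B.
Variable k : nat.

Lemma coord_le_norm (v : 'rV[R]_k) i : (`|v ord0 i| <= `|v|)%R.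
Proof.
rewrite /Num.norm /= mx_normrE.
by apply/bigmax_geP; right => /=; exists (ord0, i).
Qed.

Lemma ball_coord (x y : 'rV[R]_k) e : ball x e y -> forall i, Rlt (Rabs (y ord0 i - x ord0 i)) e.
Proof.
rewrite mx_norm_ball /ball_ => /= H i.
have := coord_le_norm (x - y) i. rewrite !mxE => H2.
apply/RltP. rewrite (_ : Rabs _ = `|x ord0 i - y ord0 i|%R); last by rewrite distrC. exact: (le_lt_trans H2 H).
Qed.

Lemma T_row (x : vec k) : (fun i => (\row_j x j)%R ord0 i) = x.
Proof. by apply: funext => i; rewrite mxE. Qed.

Lemma evt_max (S : vec k -> Prop) (f : vec k -> R) :
 (exists x, S x) ->
 (exists M, forall x, S x -> forall i, Rle (Rabs (x i)) M) ->
 (forall x, (forall eps, Rlt 0 eps -> exists y, S y /\ forall i, Rlt (Rabs (y i - x i)) eps) -> S x) ->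
 (exists Lc, forall x y d, Rle 0 d -> (forall i, Rle (Rabs (y i - x i)) d) -> Rle (Rabs (f y - f x)) (Lc * d)) ->
 exists x, S x /\ forall y, S y -> Rle (f y) (f x).
Proof.
move=> [x0 Sx0] [M HM] Hcl [Lc HL].
pose T (v : 'rV[R]_k) : vec k := fun i => v ord0 i.
pose A := [set v : 'rV[R]_k | S (T v)].
have A0 : A !=set0 by exists (\row_j x0 j)%R; rewrite /A /= /T T_row.
have Acl : closed A.
  rewrite closedE => p Hp; apply: contrapT => nAp; apply: Hp.
  have : ~ (forall eps, Rlt 0 eps -> exists y, S y /\ forall i, Rlt (Rabs (y i - T p i)) eps).
    by move=> H; apply: nAp; apply: Hcl.
  move=> /existsNP [e /not_implyP [e0 He]].
  apply/nbhs_ballP; exists e; first by apply/RltP.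
  move=> v Hb Av. have Hv := @ball_coord _ _ _ Hb. apply: He. exists (T v). split; first by []. move=> i. exact: Hv i.


have Acp : compact A.
  apply: (subclosed_compact Acl (@rV_compact _ _ (fun=> `[(- M)%R, M]%classic) _)).
    by move=> _; apply: segment_compact.
  move=> v Av i /=; have := HM _ Av i; rewrite /T => /RleP H.
  by rewrite in_itv /= -ler_norml.
have Acont : {within A, continuous (f \o T)}.
  apply: continuous_subspaceT => x.
  rewrite /continuous_at; apply/(@pseudometric_normed_Zmodule.cvgrPdist_lt _ R^o _ _ (nbhs_filter x)) => eps /RltP eps0.
  have {}eps0 : Rlt 0 eps := eps0.
  pose d := Rdiv eps (Rabs Lc + 1).
  have Lc1 : Rlt 0 (Rabs Lc + 1) by have := Rabs_pos Lc; lra.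
  have d0 : Rlt 0 d by apply: Rdiv_lt_0_compat.
  apply/nbhs_ballP; exists d; first by apply/RltP.
  move=> t Hb; have Ht := @ball_coord _ _ _ Hb => /=.
  have H1 : forall i, Rle (Rabs (T t i - T x i)) d by move=> i; apply: Rlt_le; apply: Ht.
  have := HL _ _ _ (Rlt_le _ _ d0) H1 => H2.
  apply/RltP; rewrite (_ : `|_|%R = Rabs (f (T t) - f (T x))); last by rewrite distrC.
  apply: (Rle_lt_trans _ _ _ H2).
  apply: (Rle_lt_trans _ (Rabs Lc * d)); first by apply: Rmult_le_compat_r; [lra|apply: RRle_abs].
  rewrite /d. apply: (Rmult_lt_reg_r (Rabs Lc + 1)) => //.
  have -> : (Rabs Lc * Rdiv eps (Rabs Lc + 1) * (Rabs Lc + 1) = Rabs Lc * eps)%coqR by field; lra.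
  have := Rabs_pos Lc; nra.
have [c Ac Hc] := EVT_max_rV A0 Acp Acont.
exists (T c); split; first by move: Ac; rewrite inE.
move=> y Sy.
have : (\row_j y j)%R \in A by rewrite inE /A /= /T T_row.
move=> /Hc /RleP; rewrite /= /T T_row //.
Qed.
End B.

End BridgeM.
Import BridgeM.

From mathcomp Require Import Rstruct.
Set Implicit Arguments.
Unset Strict Implicit.
Local Open Scope R_scope.


Section V1.
Variable n : nat.
Implicit Types x y z u v w : vec n.

Lemma sum_add (F G : 'I_n -> R) : \big[Rplus/0]_(i < n) (F i + G i) = \big[Rplus/0]_(i < n) F i + \big[Rplus/0]_(i < n) G i.
Proof. by rewrite big_split. Qed.

Lemma sum_scale c (F : 'I_n -> R) : \big[Rplus/0]_(i < n) (c * F i) = c * \big[Rplus/0]_(i < n) F i.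
Proof. by rewrite big_distrr. Qed.

Lemma sum_le (F G : 'I_n -> R) : (forall i, F i <= G i) -> \big[Rplus/0]_(i < n) F i <= \big[Rplus/0]_(i < n) G i.
Proof.
move=> H; elim/big_ind2: _ => //; [lra | move=> *; lra].
Qed.

Lemma sum_ext (F G : 'I_n -> R) : (forall i, F i = G i) -> \big[Rplus/0]_(i < n) F i = \big[Rplus/0]_(i < n) G i.
Proof. by move=> H; apply: eq_bigr => i _. Qed.

Lemma sum_nonneg (F : 'I_n -> R) : (forall i, 0 <= F i) -> 0 <= \big[Rplus/0]_(i < n) F i.
Proof. move=> H; elim/big_ind: _ => //; [lra | move=> *; lra]. Qed.

Lemma sum_one (F : 'I_n -> R) j : (forall i, i <> j -> F i = 0) -> \big[Rplus/0]_(i < n) F i = F j.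
Proof.
move=> H; rewrite (bigD1 j) //= big1 ?Rplus_0_r // => i /eqP; auto.
Qed.

Lemma sum_zero (F : 'I_n -> R) : (forall i, F i = 0) -> \big[Rplus/0]_(i < n) F i = 0.
Proof. by move=> H; rewrite big1. Qed.

Lemma sum_ge_one (F : 'I_n -> R) j : (forall i, 0 <= F i) -> F j <= \big[Rplus/0]_(i < n) F i.
Proof.
move=> H; rewrite (bigD1 j) //=.
have : 0 <= \big[Rplus/0]_(i < n | i != j) F i by elim/big_ind: _ => //; [lra|move=> *; lra].
move=> H0; apply: (Rle_trans _ (F j + 0)); [lra | apply: Rplus_le_compat_l; exact: H0].
Qed.

Lemma dot_sym x y : dot x y = dot y x.
Proof. by apply: sum_ext => i; rewrite Rmult_comm. Qed.

Lemma dot_addl x y z : dot (vadd x y) z = dot x z + dot y z.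
Proof. by rewrite /dot -sum_add; apply: sum_ext => i; rewrite /vadd; ring. Qed.

Lemma dot_scalel c x y : dot (vscale c x) y = c * dot x y.
Proof. by rewrite /dot -sum_scale; apply: sum_ext => i; rewrite /vscale; ring. Qed.

Lemma dot_subl x y z : dot (vsub x y) z = dot x z - dot y z.
Proof.
have -> : vsub x y = vadd x (vscale (-1) y) by apply: functional_extensionality => i; rewrite /vsub /vadd /vscale; ring.
rewrite dot_addl dot_scalel; ring.
Qed.

Lemma dot_addr x y z : dot z (vadd x y) = dot z x + dot z y.
Proof. by rewrite dot_sym dot_addl !(dot_sym z). Qed.
Lemma dot_scaler c x y : dot y (vscale c x) = c * dot y x.
Proof. by rewrite dot_sym dot_scalel dot_sym. Qed.
Lemma dot_subr x y z : dot z (vsub x y) = dot z x - dot z y.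
Proof. by rewrite dot_sym dot_subl !(dot_sym z). Qed.
Lemma dot0l x : dot (@vzero n) x = 0.
Proof. by apply: sum_zero => i; rewrite /vzero; ring. Qed.
Lemma dot0r x : dot x (@vzero n) = 0.
Proof. by rewrite dot_sym dot0l. Qed.
End V1.


Section V2.
Variable n : nat.
Implicit Types x y z u v w : vec n.

Definition unitv (j : 'I_n) : vec n := fun i => if i == j then 1 else 0.
Definition vsum (r : seq 'I_n) (f : 'I_n -> vec n) : vec n :=
  fun i => \big[Rplus/0]_(j <- r) f j i.

Lemma nI_ge x i : Rabs (x i) <= norm_inf x.
Proof.
rewrite /norm_inf.
have : i \in index_enum 'I_n by rewrite mem_index_enum.
elim: (index_enum 'I_n) => [|a r IH] //=.
rewrite big_cons in_cons => /orP [/eqP <-|/IH H]; first by apply: Rmax_l.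
apply: (Rle_trans _ _ _ H); apply: Rmax_r.
Qed.

Lemma nI_le x t : 0 <= t -> (forall i, Rabs (x i) <= t) -> norm_inf x <= t.
Proof.
move=> t0 H; rewrite /norm_inf; elim/big_ind: _ => //.
move=> a b Ha Hb; apply: Rmax_lub => //.
Qed.

Lemma nI_pos x : 0 <= norm_inf x.
Proof. rewrite /norm_inf; elim/big_ind: _ => //; [lra | move=> a b Ha Hb; apply: (Rle_trans _ _ _ Ha (Rmax_l _ _)) | move=> i _; apply: Rabs_pos]. Qed.

Lemma nI_att (i0 : 'I_n) x : exists i, norm_inf x = Rabs (x i).
Proof.
have : norm_inf x = 0 \/ exists i, norm_inf x = Rabs (x i).
  rewrite /norm_inf; elim/big_ind: _ => //; first by left.
    move=> a b [->|[i ->]] [->|[j ->]].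
    - by left; rewrite Rmax_left; lra.
    - right; exists j; rewrite Rmax_right //; apply: Rabs_pos.
    - right; exists i; rewrite Rmax_left //; apply: Rabs_pos.
    - right; rewrite /Rmax; case: Rle_dec => _; [by exists j | by exists i].
  by move=> i _; right; exists i.
case=> // H; exists i0; rewrite H.
have := nI_ge x i0; rewrite H => H1; have := Rabs_pos (x i0); lra.
Qed.

Lemma nI_lip x y d : 0 <= d -> (forall i, Rabs (y i - x i) <= d) -> Rabs (norm_inf y - norm_inf x) <= d.
Proof.
move=> d0 H.
have H1 : norm_inf y <= norm_inf x + d.
  apply: nI_le; first by have := nI_pos x; lra.
  move=> i; have := H i; have := nI_ge x i; have := Rabs_triang_inv (y i) (x i); lra.
have H2 : norm_inf x <= norm_inf y + d.
  apply: nI_le; first by have := nI_pos y; lra.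
  move=> i; have := H i; have := nI_ge y i; have := Rabs_triang_inv (x i) (y i).
  rewrite Rabs_minus_sym; lra.
apply: Rabs_le; lra.
Qed.

Definition Lip (f : vec n -> R) := exists Lc, forall x y d, 0 <= d ->
  (forall i, Rabs (y i - x i) <= d) -> Rabs (f y - f x) <= Lc * d.
Definition closedS (S : vec n -> Prop) := forall x,
  (forall eps, 0 < eps -> exists y, S y /\ forall i, Rabs (y i - x i) < eps) -> S x.

Lemma Lip_const c : Lip (fun _ => c).
Proof. exists 0 => x y d _ _; rewrite Rminus_diag Rabs_R0; lra. Qed.
Lemma Lip_coord i : Lip (fun x => x i).
Proof. by exists 1 => x y d _ H; rewrite Rmult_1_l. Qed.
Lemma Lip_nI : Lip (@norm_inf n).
Proof. by exists 1 => x y d d0 H; rewrite Rmult_1_l; apply: nI_lip. Qed.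
Lemma Lip_add f g : Lip f -> Lip g -> Lip (fun x => f x + g x).
Proof.
move=> [a Ha] [b Hb]; exists (a + b) => x y d d0 H.
have := Ha _ _ _ d0 H; have := Hb _ _ _ d0 H.
have := Rabs_triang (f y - f x) (g y - g x).
have -> : f y + g y - (f x + g x) = (f y - f x) + (g y - g x) by ring.
nra.
Qed.
Lemma Lip_scale c f : Lip f -> Lip (fun x => c * f x).
Proof.
move=> [a Ha]; exists (Rabs c * a) => x y d d0 H.
rewrite -Rmult_minus_distr_l Rabs_mult Rmult_assoc.
apply: Rmult_le_compat_l; [apply: Rabs_pos | exact: Ha].
Qed.
Lemma Lip_sub f g : Lip f -> Lip g -> Lip (fun x => f x - g x).
Proof.
move=> Hf Hg; have [a Ha] := Lip_add Hf (Lip_scale (-1) Hg).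
exists a => x y d d0 H; have := Ha x y d d0 H.
by have -> : f y + -1 * g y - (f x + -1 * g x) = f y - g y - (f x - g x) by ring.
Qed.
Lemma Lip_ext f g : (forall x, f x = g x) -> Lip f -> Lip g.
Proof. move=> E [a Ha]; exists a => x y d d0 H; rewrite -!E; exact: Ha. Qed.

Lemma Lip_dot w : Lip (fun x => dot w x).
Proof.
exists (\big[Rplus/0]_(i < n) Rabs (w i)) => x y d d0 H.
rewrite -dot_subr /dot Rmult_comm -sum_scale.
apply: (big_ind2 (fun a b => Rabs a <= b)); first by rewrite Rabs_R0; lra.
  move=> a b c e Hac Hbe; have := Rabs_triang a c; lra.
move=> i _; rewrite /vsub Rabs_mult Rmult_comm.
apply: Rmult_le_compat_r; [apply: Rabs_pos | exact: H].
Qed.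

Lemma closed_le f : Lip f -> closedS (fun x => f x <= 0).
Proof.
move=> [a Ha] x H; apply: Rnot_lt_le => fx.
have a1 : 0 < Rabs a + 1 by have := Rabs_pos a; lra.
have e0 : 0 < f x / (Rabs a + 1) by apply: Rdiv_lt_0_compat.
have [y [fy Hy]] := H _ e0.
have := Ha x y (f x / (Rabs a + 1)) (Rlt_le _ _ e0) (fun i => Rlt_le _ _ (Hy i)).
have : a * (f x / (Rabs a + 1)) <= Rabs a * (f x / (Rabs a + 1)).
  apply: Rmult_le_compat_r; [lra | apply: RRle_abs].
have : Rabs a * (f x / (Rabs a + 1)) < f x.
  apply: (Rmult_lt_reg_r (Rabs a + 1)) => //.
  have -> : Rabs a * (f x / (Rabs a + 1)) * (Rabs a + 1) = Rabs a * f x by field; lra.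
  have := Rabs_pos a; nra.
have := Rle_abs (-(f y - f x)); rewrite Rabs_Ropp; lra.
Qed.

Lemma closed_and (S1 S2 : vec n -> Prop) : closedS S1 -> closedS S2 -> closedS (fun x => S1 x /\ S2 x).
Proof.
move=> H1 H2 x H; split; [apply: H1 | apply: H2] => e e0; have [y [[? ?] ?]] := H e e0; by exists y.
Qed.

Lemma closed_ext (S1 S2 : vec n -> Prop) : (forall x, S1 x <-> S2 x) -> closedS S1 -> closedS S2.
Proof.
move=> E H x Hx; apply/E; apply: H => e e0; have [y [Sy Hy]] := Hx e e0; exists y; split => //; exact/E.
Qed.

Lemma closed_le2 f g : Lip f -> Lip g -> closedS (fun x => f x <= g x).
Proof.
move=> Hf Hg; apply: closed_ext (closed_le (Lip_sub Hf Hg)) => x; split; lra.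
Qed.

Lemma closed_eq2 f g : Lip f -> Lip g -> closedS (fun x => f x = g x).
Proof.
move=> Hf Hg; apply: closed_ext (closed_and (closed_le2 Hf Hg) (closed_le2 Hg Hf)) => x; split; lra.
Qed.

Lemma closed_all (I : Type) (S : I -> vec n -> Prop) : (forall i, closedS (S i)) -> closedS (fun x => forall i, S i x).
Proof.
move=> H x Hx i; apply: H => e e0; have [y [Sy Hy]] := Hx e e0; by exists y.
Qed.

Lemma closed_imp (P : Prop) (S : vec n -> Prop) : closedS S -> closedS (fun x => P -> S x).
Proof. move=> H x Hx p; apply: H => e e0; have [y [Sy Hy]] := Hx e e0; exists y; auto. Qed.

Lemma evt (S : vec n -> Prop) (f : vec n -> R) :
  (exists x, S x) -> (exists M, forall x, S x -> forall i, Rabs (x i) <= M) ->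
  closedS S -> Lip f -> exists x, S x /\ forall y, S y -> f y <= f x.
Proof. move=> H1 H2 H3 [a Ha]; apply: evt_max => //; by exists a. Qed.

Lemma evt_min (S : vec n -> Prop) (f : vec n -> R) :
  (exists x, S x) -> (exists M, forall x, S x -> forall i, Rabs (x i) <= M) ->
  closedS S -> Lip f -> exists x, S x /\ forall y, S y -> f x <= f y.
Proof.
move=> H1 H2 H3 Hf; have [x [Sx Hx]] := evt H1 H2 H3 (Lip_scale (-1) Hf).
exists x; split => // y Sy; have := Hx y Sy; lra.
Qed.

Section Norm.
Variable N : vec n -> R.
Hypothesis HN : IsNorm N.

Lemma vscale0 x : vscale 0 x = @vzero n.
Proof. by apply: functional_extensionality => i; rewrite /vscale /vzero Rmult_0_l. Qed.

Lemma N_0 : N (@vzero n) = 0.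
Proof. case: HN => _ [H _]; rewrite -(vscale0 (@vzero n)) H Rabs_R0; ring. Qed.

Lemma N_nonneg x : 0 <= N x.
Proof.
case: HN => _ [Hs Ht].
have := Ht x (vscale (-1) x); rewrite Hs.
have -> : vadd x (vscale (-1) x) = @vzero n by apply: functional_extensionality => i; rewrite /vadd /vscale /vzero; ring.
rewrite N_0 Rabs_Ropp Rabs_R1; lra.
Qed.

Lemma N_scale c x : N (vscale c x) = Rabs c * N x.
Proof. by case: HN => _ [H _]. Qed.
Lemma N_tri x y : N (vadd x y) <= N x + N y.
Proof. by case: HN => _ [_ H]. Qed.
Lemma N_zero x : N x = 0 -> forall i, x i = 0.
Proof. by case: HN => H _; apply: H. Qed.

Lemma N_sub_tri x y : Rabs (N y - N x) <= N (vsub y x).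
Proof.
have E1 : y = vadd (vsub y x) x by apply: functional_extensionality => i; rewrite /vadd /vsub; ring.
have E2 : x = vadd (vsub x y) y by apply: functional_extensionality => i; rewrite /vadd /vsub; ring.
have E3 : vsub x y = vscale (-1) (vsub y x) by apply: functional_extensionality => i; rewrite /vscale /vsub; ring.
have h1 := N_tri (vsub y x) x; rewrite -E1 in h1.
have h2 := N_tri (vsub x y) y; rewrite -E2 E3 N_scale Rabs_Ropp Rabs_R1 in h2.
apply: Rabs_le; lra.
Qed.

Lemma N_vsum r f : N (vsum r f) <= \big[Rplus/0]_(j <- r) N (f j).
Proof.
elim: r => [|a r IH].
  rewrite big_nil; have -> : vsum [::] f = @vzero n.
    by apply: functional_extensionality => i; rewrite /vsum big_nil.
  rewrite N_0; lra.
rewrite big_cons.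
have -> : vsum (a :: r) f = vadd (f a) (vsum r f).
  by apply: functional_extensionality => i; rewrite /vsum /vadd big_cons.
have := N_tri (f a) (vsum r f); lra.
Qed.

Lemma vdecomp x : x = vsum (index_enum 'I_n) (fun j => vscale (x j) (unitv j)).
Proof.
apply: functional_extensionality => i; rewrite /vsum /vscale /unitv.
rewrite -/(\big[Rplus/0]_(j < n) (x j * (if i == j then 1 else 0))).
rewrite (sum_one (j:=i)) ?eqxx ?Rmult_1_r // => j /eqP; rewrite eq_sym => /negbTE ->; ring.
Qed.

Lemma N_upper : exists CN, 0 <= CN /\ forall x d, 0 <= d -> (forall i, Rabs (x i) <= d) -> N x <= CN * d.
Proof.
exists (\big[Rplus/0]_(j < n) N (unitv j)); split.
  by apply: sum_nonneg => j; apply: N_nonneg.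
move=> x d d0 H; rewrite {1}(vdecomp x).
apply: (Rle_trans _ _ _ (N_vsum _ _)).
rewrite Rmult_comm -sum_scale; apply: sum_le => j.
rewrite N_scale; apply: Rmult_le_compat_r; [apply: N_nonneg | exact: H].
Qed.

Lemma Lip_N : Lip N.
Proof.
have [CN [CN0 HC]] := N_upper; exists CN => x y d d0 H.
apply: (Rle_trans _ _ _ (N_sub_tri x y)); apply: HC => // i; exact: H.
Qed.

Lemma N_lower (i0 : 'I_n) : exists c, 0 < c /\ forall x i, c * Rabs (x i) <= N x.
Proof.
pose S := fun x : vec n => norm_inf x = 1.
have [x0 [Sx0 Hx0]] : exists x, S x /\ forall y, S y -> N x <= N y.
  apply: evt_min.
  - exists (unitv i0); rewrite /S; apply: Rle_antisym.
      by apply: nI_le; [lra | move=> i; rewrite /unitv; case: (i == i0); rewrite ?Rabs_R1 ?Rabs_R0; lra].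
    by have := nI_ge (unitv i0) i0; rewrite /unitv eqxx Rabs_R1.
  - by exists 1 => x Sx i; rewrite -Sx; apply: nI_ge.
  - by apply: closed_eq2; [apply: Lip_nI | apply: Lip_const].
  - exact: Lip_N.
have c0 : 0 < N x0.
  case: (N_nonneg x0) => // /esym H0; exfalso.
  have [i Hi] := nI_att i0 x0; move: Sx0; rewrite /S Hi (N_zero H0) Rabs_R0; lra.
exists (N x0); split => // x i.
case: (nI_pos x) => Hp; last first.
  have := nI_ge x i; rewrite -Hp => h; have := Rabs_pos (x i); have := N_nonneg x; nra.
have Sx : S (vscale (/ norm_inf x) x).
  rewrite /S; have [j Hj] := nI_att i0 (vscale (/ norm_inf x) x).
  apply: Rle_antisym.
    apply: nI_le; [lra | move=> k; rewrite /vscale Rabs_mult Rabs_Rinv; try lra].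
    rewrite Rabs_pos_eq; last lra.
    apply: (Rmult_le_reg_l (norm_inf x)) => //; field_simplify; try lra; have := nI_ge x k; lra.
  have [k Hk] := nI_att i0 x.
  have := nI_ge (vscale (/ norm_inf x) x) k; rewrite /vscale Rabs_mult -Hk Rabs_Rinv; try lra.
  rewrite Rabs_pos_eq; last lra; rewrite Rinv_l; lra.
have := Hx0 _ Sx; rewrite N_scale Rabs_Rinv; try lra; rewrite Rabs_pos_eq; last lra.
move=> h; have h2 : N x0 * norm_inf x <= N x.
  have := Rmult_le_compat_r (norm_inf x) _ _ (Rlt_le _ _ Hp) h.
  have -> : / norm_inf x * N x * norm_inf x = N x by field; lra.
  done.
have := nI_ge x i; nra.
Qed.

End Norm.

End V2.


Section HB.
Variable n : nat.
Variable S : vec n -> R -> Prop.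
Hypothesis Sne : forall z, exists a, S z a.
Hypothesis Sadd : forall z w a b, S z a -> S w b -> S (vadd z w) (a + b).
Hypothesis Sscale : forall c z a, 0 < c -> S z a -> S (vscale c z) (c * a).
Hypothesis S0 : forall a, S (@vzero n) a -> 0 <= a.

Definition suppk (k : nat) (z : vec n) := forall i : 'I_n, (k <= i)%N -> z i = 0.

Lemma HB_step k : (exists g : vec n, forall z a, suppk k z -> S z a -> dot g z <= a) ->
  (exists g : vec n, forall z a, suppk k.+1 z -> S z a -> dot g z <= a).
Proof.
move=> [g Hg].
case: (ltnP k n) => Hk; last first.
  exists g => z a Hz; apply: Hg => i Hi; exfalso.
  by have := ltn_ord i; rewrite ltnNge (leq_trans Hk Hi).
pose ek := Ordinal Hk.
pose e := unitv ek.
pose A := fun t => exists z a, suppk k z /\ S (vsub z e) a /\ t = dot g z - a.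
have Bnd : forall z' a', suppk k z' -> S (vadd z' e) a' -> forall t, A t -> t <= a' - dot g z'.
  move=> z' a' Hz' Sz' t [z [a [Hz [Sz ->]]]].
  have := Sadd Sz Sz'.
  have -> : vadd (vsub z e) (vadd z' e) = vadd z z'.
    by apply: functional_extensionality => i; rewrite /vadd /vsub; ring.
  move=> Szz; have hs : suppk k (vadd z z') by move=> i Hi; rewrite /vadd Hz // Hz' //; ring.
  have := Hg _ _ hs Szz; rewrite dot_addr; lra.
have supp0 : suppk k (@vzero n) by [].
have [a1 Sa1] := Sne (vadd (@vzero n) e).
have [a0 Sa0] := Sne (vsub (@vzero n) e).
have [c [Hc1 Hc2]] : {c | is_lub A c}.
  apply: completeness.
    by exists (a1 - dot g (@vzero n)) => t At; apply: (Bnd _ _ supp0 Sa1).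
  by exists (dot g (@vzero n) - a0); exists (@vzero n), a0.
pose g' := fun i => if i == ek then c else g i.
exists g' => z a Hz Sz.
pose t := z ek.
pose z0 := fun i => if i == ek then 0 else z i.
have Hz0 : suppk k z0.
  move=> i Hi; rewrite /z0; case: eqP => // Hne; apply: Hz.
  rewrite ltn_neqAle Hi andbT; apply/eqP => Heq; apply: Hne; apply: val_inj; by rewrite /= -Heq.
have Ez : z = vadd z0 (vscale t e).
  apply: functional_extensionality => i; rewrite /vadd /vscale /z0 /e /unitv /t.
  by case: eqP => [->|_]; ring.
have Edot : dot g' z = dot g z0 + t * c.
  rewrite {1}Ez dot_addr dot_scaler; congr (_ + _ * _).
    apply: sum_ext => i; rewrite /g' /z0; by case: eqP => _; ring.
  rewrite /dot (sum_one (j:=ek)) /g' /e /unitv ?eqxx; first ring.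
  by move=> i /eqP /negbTE ->; ring.
rewrite Edot.
case: (Rtotal_order t 0) => [tn|[t0|tp]].
-
  have Ss := Sscale (c:=/ (- t)) _ Sz; rewrite Ez in Ss.
  have Ev : vscale (/ - t) (vadd z0 (vscale t e)) = vsub (vscale (/ - t) z0) e.
    apply: functional_extensionality => i; rewrite /vadd /vsub /vscale; field; lra.
  rewrite Ev in Ss; have At : A (dot g (vscale (/ - t) z0) - / - t * a).
    exists (vscale (/ - t) z0), (/ - t * a); split => //; last split => //.
      by move=> i Hi; rewrite /vscale Hz0 //; ring.
    by apply: Ss; apply: Rinv_0_lt_compat; lra.
  have := Hc1 _ At; rewrite dot_scaler => h.
  have : dot g z0 - a <= - t * c.
    have -> : dot g z0 - a = - t * (/ - t * dot g z0 - / - t * a) by field; lra.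
    by apply: Rmult_le_compat_l; lra.
  lra.
- have Ez0 : z = z0.
    rewrite {1}Ez t0; apply: functional_extensionality => i; rewrite /vadd /vscale; ring.
  rewrite t0 Rmult_0_l Rplus_0_r; apply: Hg => //; by rewrite -Ez0.
- have Ss := Sscale (c:=/ t) _ Sz; rewrite Ez in Ss.
  have Ev : vscale (/ t) (vadd z0 (vscale t e)) = vadd (vscale (/ t) z0) e.
    apply: functional_extensionality => i; rewrite /vadd /vscale; field; lra.
  rewrite Ev in Ss.
  have h := Hc2 _ (Bnd _ _ _ (Ss (Rinv_0_lt_compat _ tp))).
  have : suppk k (vscale (/ t) z0) by move=> i Hi; rewrite /vscale Hz0 //; ring.
  move=> /h; rewrite dot_scaler => h2.
  have : t * c <= a - dot g z0.
    have -> : a - dot g z0 = t * (/ t * a - / t * dot g z0) by field; lra.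
    by apply: Rmult_le_compat_l; lra.
  lra.
Qed.

Lemma HB : exists g : vec n, forall z a, S z a -> dot g z <= a.
Proof.
have H : forall k, exists g : vec n, forall z a, suppk k z -> S z a -> dot g z <= a.
  elim=> [|k IH]; last by apply: HB_step.
  exists (@vzero n) => z a Hz Sz.
  have -> : z = @vzero n by apply: functional_extensionality => i; apply: Hz.
  rewrite dot0l; apply: S0.
  by have -> : @vzero n = z by apply: functional_extensionality => i; symmetry; apply: Hz.
have [g Hg] := H n; exists g => z a Sz; apply: Hg => // i Hi.
by have := ltn_ord i; rewrite ltnNge Hi.
Qed.
End HB.


Lemma lub_unique (E : R -> Prop) a b : is_lub E a -> is_lub E b -> a = b.
Proof. move=> [Ha1 Ha2] [Hb1 Hb2]; apply: Rle_antisym; [apply: Ha2 | apply: Hb2]; done. Qed.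

Lemma lub_exists (E : R -> Prop) : (exists s, E s) -> (exists M, forall s, E s -> s <= M) -> exists b, is_lub E b.
Proof. move=> H1 [M HM]; have [b Hb] := completeness E (ex_intro _ M HM) H1; by exists b. Qed.

Lemma lub_nonempty (E : R -> Prop) b : is_lub E b -> exists s, E s.
Proof.
move=> [_ H]; apply: NNPP => Hn.
have : b <= b - 1 by apply: H => s Es; exfalso; apply: Hn; by exists s.
lra.
Qed.

Lemma IsMax_unique P a b : IsMax P a -> IsMax P b -> a = b.
Proof. move=> [Pa Ha] [Pb Hb]; apply: Rle_antisym; auto. Qed.
Lemma IsMin_unique P a b : IsMin P a -> IsMin P b -> a = b.
Proof. move=> [Pa Ha] [Pb Hb]; apply: Rle_antisym; auto. Qed.

Section Gen.
Variable n : nat.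
Variable N : vec n -> R.
Hypothesis HN : IsNorm N.
Variable C : 'I_n -> Prop.
Variable i0 : 'I_n.
Hypothesis Ci0 : C i0.
Variable Lp : vec n -> Prop.
Hypothesis Lp_add : forall x y, Lp x -> Lp y -> Lp (vadd x y).
Hypothesis Lp_scale : forall c x, Lp x -> Lp (vscale c x).
Hypothesis Lp_V : forall x, Lp x -> Vcoord C x.
Hypothesis Lp_closed : closedS Lp.
Variable p : vec n.
Hypothesis Lp_p : Lp p.
Hypothesis p_pos : forall i, C i -> 0 < p i.

Lemma Lp0 : Lp (@vzero n).
Proof. by rewrite -(vscale0 p); apply: Lp_scale. Qed.

Lemma Lp_opp x : Lp x -> Lp (vscale (-1) x).
Proof. by apply: Lp_scale. Qed.

Definition piC (g : vec n) : vec n := fun i => if excluded_middle_informative (C i) then g i else 0.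

Lemma piC_V g : Vcoord C (piC g).
Proof. by move=> i nC; rewrite /piC; case: excluded_middle_informative. Qed.

Lemma dot_piC g z : Vcoord C z -> dot (piC g) z = dot g z.
Proof.
move=> Vz; apply: sum_ext => i; rewrite /piC; case: excluded_middle_informative => // nC.
by rewrite Vz //; ring.
Qed.

Lemma V_closed : closedS (Vcoord C).
Proof.
apply: closed_all => i; apply: closed_imp.
by apply: closed_eq2; [apply: Lip_coord | apply: Lip_const].
Qed.

Lemma K_closed : closedS (Kcoord C).
Proof.
apply: closed_and; first exact: V_closed.
apply: closed_all => i; apply: closed_imp.
by apply: closed_le2; [apply: Lip_const | apply: Lip_coord].
Qed.

Lemma Ext w r : 0 <= r -> (forall x, Lp x -> dot w x <= r * N x) ->
  exists h, (forall x, Lp x -> dot h x = dot w x) /\ forall z, dot h z <= r * N z.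
Proof.
move=> r0 Hw.
pose S := fun z a => exists x, Lp x /\ r * N (vsub z x) + dot w x <= a.
have [h Hh] : exists h : vec n, forall z a, S z a -> dot h z <= a.
  apply: HB.
  - move=> z; exists (r * N (vsub z (@vzero n)) + dot w (@vzero n)); exists (@vzero n); split; [exact: Lp0 | lra].
  - move=> z z' a b [x [Lx Hx]] [x' [Lx' Hx']]; exists (vadd x x'); split; first by apply: Lp_add.
    have -> : vsub (vadd z z') (vadd x x') = vadd (vsub z x) (vsub z' x').
      by apply: functional_extensionality => i; rewrite /vsub /vadd; ring.
    rewrite dot_addr; have := N_tri HN (vsub z x) (vsub z' x'); nra.
  - move=> c z a c0 [x [Lx Hx]]; exists (vscale c x); split; first by apply: Lp_scale.
    have -> : vsub (vscale c z) (vscale c x) = vscale c (vsub z x).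
      by apply: functional_extensionality => i; rewrite /vsub /vscale; ring.
    rewrite N_scale // dot_scaler Rabs_pos_eq; [nra | lra].
  - move=> a [x [Lx Hx]].
    have E : vsub (@vzero n) x = vscale (-1) x by apply: functional_extensionality => i; rewrite /vsub /vscale /vzero; ring.
    rewrite E N_scale // Rabs_Ropp Rabs_R1 in Hx.
    have := Hw _ (Lp_opp Lx); rewrite dot_scaler N_scale // Rabs_Ropp Rabs_R1; lra.
exists h; split.
  move=> x Lx; apply: Rle_antisym.
    apply: Hh; exists x; split => //.
    have -> : vsub x x = @vzero n by apply: functional_extensionality => i; rewrite /vsub /vzero; ring.
    rewrite N_0 //; lra.
  have : dot h (vscale (-1) x) <= dot w (vscale (-1) x).
    apply: Hh; exists (vscale (-1) x); split; first by apply: Lp_opp.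
    have -> : vsub (vscale (-1) x) (vscale (-1) x) = @vzero n by apply: functional_extensionality => i; rewrite /vsub /vzero; ring.
    rewrite N_0 //; lra.
  rewrite !dot_scaler; lra.
move=> z; apply: Hh; exists (@vzero n); split; first exact: Lp0.
have -> : vsub z (@vzero n) = z by apply: functional_extensionality => i; rewrite /vsub /vzero; ring.
rewrite dot0r; lra.
Qed.

Lemma bounded_N1 : exists M, forall x, N x <= 1 -> forall i, Rabs (x i) <= M.
Proof.
have [c [c0 Hc]] := N_lower HN i0.
exists (/ c) => x Hx i; have := Hc x i => h.
apply: (Rmult_le_reg_l c) => //; rewrite Rinv_r; lra.
Qed.

Lemma unit_exists : exists x, Vcoord C x /\ N x = 1.
Proof.
pose e := unitv i0.
have Ve : Vcoord C e by move=> i nC; rewrite /e /unitv; case: eqP => // Ei; rewrite Ei in nC; contradiction.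
have Ne : 0 < N e.
  case: (N_nonneg HN e) => // /esym H; have := N_zero HN H i0; rewrite /e /unitv eqxx; lra.
exists (vscale (/ N e) e); split.
  by move=> i nC; rewrite /vscale Ve //; ring.
rewrite N_scale // Rabs_pos_eq; [field; lra | apply: Rlt_le; apply: Rinv_0_lt_compat; lra].
Qed.

Lemma dual_exists w : exists d, DualNormIs (Vcoord C) N w d.
Proof.
have [M HM] := bounded_N1.
have [x [[Vx Nx] Hx]] : exists x, (Vcoord C x /\ N x = 1) /\ forall y, (Vcoord C y /\ N y = 1) -> dot w y <= dot w x.
  apply: evt.
  - exact: unit_exists.
  - by exists M => x [_ Nx]; apply: HM; lra.
  - apply: closed_and; [exact: V_closed | apply: closed_eq2; [exact: Lip_N | exact: Lip_const]].
  - exact: Lip_dot.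
exists (dot w x); split; first by exists x.
by move=> a [y [Vy [Ny ->]]]; apply: Hx.
Qed.

Lemma dual_ge w d x : DualNormIs (Vcoord C) N w d -> Vcoord C x -> dot w x <= d * N x.
Proof.
move=> [[y [Vy [Ny ->]]] Hd] Vx.
have d0 : 0 <= dot w y.
  case: (Rle_or_lt 0 (dot w y)) => // h.
  have : dot w (vscale (-1) y) <= dot w y.
    apply: Hd; exists (vscale (-1) y); split; first by move=> i nC; rewrite /vscale Vy //; ring.
    by split; [rewrite N_scale // Rabs_Ropp Rabs_R1; lra | ].
  rewrite dot_scaler; lra.
case: (N_nonneg HN x) => Nx; last first.
  have -> : x = @vzero n by apply: functional_extensionality => i; apply: (N_zero HN); by rewrite -Nx.
  rewrite dot0r N_0 //; lra.
have : dot w (vscale (/ N x) x) <= dot w y.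
  apply: Hd; exists (vscale (/ N x) x); split; first by move=> i nC; rewrite /vscale Vx //; ring.
  split => //; rewrite N_scale // Rabs_pos_eq; [field; lra | apply: Rlt_le; apply: Rinv_0_lt_compat; lra].
rewrite dot_scaler => h.
have := Rmult_le_compat_r (N x) _ _ (Rlt_le _ _ Nx) h.
have -> : / N x * dot w x * N x = dot w x by field; lra.
lra.
Qed.

Lemma dual_le w d r : DualNormIs (Vcoord C) N w d -> (forall z, Vcoord C z -> dot w z <= r * N z) -> d <= r.
Proof.
move=> [[y [Vy [Ny ->]]] _] H; have := H y Vy; rewrite Ny; lra.
Qed.


Lemma finMin_seq (h : 'I_n -> R) (r : seq 'I_n) : (exists i, i \in r /\ C i) ->
  exists j, j \in r /\ C j /\ forall i, i \in r -> C i -> h j <= h i.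
Proof.
elim: r => [|a r IH] [i [Hi Ci]] //.
case: (classic (exists i, i \in r /\ C i)) => Hr.
  have [j [jr [Cj Hj]]] := IH Hr.
  case: (classic (C a)) => Ca.
    case: (Rle_or_lt (h a) (h j)) => Hl.
      exists a; split; first by rewrite in_cons eqxx.
      split => // k; rewrite in_cons => /orP [/eqP -> //|kr Ck]; first by lra.
      have := Hj k kr Ck; lra.
    exists j; split; first by rewrite in_cons jr orbT.
    split => // k; rewrite in_cons => /orP [/eqP -> _|kr Ck]; [lra | exact: Hj].
  exists j; split; first by rewrite in_cons jr orbT.
  split => // k; rewrite in_cons => /orP [/eqP -> Ck|kr Ck]; [contradiction | exact: Hj].
have Ca : C a.
  move: Hi; rewrite in_cons => /orP [/eqP Ei|ir]; first by rewrite -Ei. exfalso; apply: Hr; by exists i.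
exists a; split; first by rewrite in_cons eqxx.
split => // k; rewrite in_cons => /orP [/eqP -> _|kr Ck]; first lra.
exfalso; apply: Hr; by exists k.
Qed.

Lemma finMin (h : 'I_n -> R) : exists j, C j /\ forall i, C i -> h j <= h i.
Proof.
have [j [_ [Cj Hj]]] := @finMin_seq h (index_enum 'I_n) (ex_intro _ i0 (conj (mem_index_enum i0) Ci0)).
exists j; split => // i Ci; apply: Hj => //; exact: mem_index_enum.
Qed.

Lemma finMax (h : 'I_n -> R) : exists j, C j /\ forall i, C i -> h i <= h j.
Proof.
have [j [Cj Hj]] := finMin (fun i => - h i); exists j; split => // i Ci; have := Hj i Ci; lra.
Qed.

Lemma ex_minC (x : vec n) : exists a, IsMin (fun c => exists i, C i /\ c = x i) a.
Proof.
have [j [Cj Hj]] := finMin x; exists (x j); split; first by exists j.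
by move=> c [i [Ci ->]]; apply: Hj.
Qed.

Definition minC (x : vec n) : R := proj1_sig (constructive_indefinite_description _ (ex_minC x)).

Lemma minC_spec x : IsMin (fun c => exists i, C i /\ c = x i) (minC x).
Proof. rewrite /minC; case: constructive_indefinite_description => //. Qed.

Lemma minC_le x i : C i -> minC x <= x i.
Proof. move=> Ci; case: (minC_spec x) => _ H; apply: H; by exists i. Qed.

Lemma minC_att x : exists i, C i /\ minC x = x i.
Proof. by case: (minC_spec x). Qed.

Lemma minC_ge x t : (forall i, C i -> t <= x i) -> t <= minC x.
Proof. move=> H; have [i [Ci ->]] := minC_att x; auto. Qed.

Lemma Lip_minC : Lip minC.
Proof.
exists 1 => x y d d0 H; rewrite Rmult_1_l; apply: Rabs_le; split.
- have [i [Ci Ei]] := minC_att y; rewrite Ei.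
  have := minC_le x Ci; have := H i; have := Rle_abs (y i - x i); have := Rabs_Ropp (y i - x i); have := Rle_abs (-(y i - x i)); lra.
- have [i [Ci Ei]] := minC_att x; rewrite Ei.
  have := minC_le y Ci; have := H i; have := Rle_abs (y i - x i); lra.
Qed.

Lemma minC_scale c x : 0 < c -> minC (vscale c x) = c * minC x.
Proof.
move=> c0; apply: Rle_antisym.
  have [i [Ci ->]] := minC_att x; have := minC_le (vscale c x) Ci; rewrite /vscale; lra.
apply: minC_ge => i Ci; rewrite /vscale; apply: Rmult_le_compat_l; [lra | exact: minC_le].
Qed.

Lemma K_nonneg x : Kcoord C x -> Defs.nonneg x.
Proof.
move=> [Vx Hx] i; case: (classic (C i)) => Ci; first by apply: Hx.
by rewrite Vx //; lra.
Qed.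

Lemma Lp_nonneg_K x : Lp x -> Defs.nonneg x -> Kcoord C x.
Proof. move=> Lx nx; split; [exact: Lp_V | by move=> i _; apply: nx]. Qed.

Definition v1 : vec n := fun i => if excluded_middle_informative (C i) then 1 else 0.

Lemma v1_K : Kcoord C v1.
Proof.
split; first by move=> i nC; rewrite /v1; case: excluded_middle_informative.
move=> i Ci; rewrite /v1; case: excluded_middle_informative => Hc /=; lra.
Qed.

Lemma v1_C i : C i -> v1 i = 1.
Proof. by move=> Ci; rewrite /v1; case: excluded_middle_informative. Qed.

Lemma sum_V u : Vcoord C u -> \big[Rplus/0]_(i < n) u i = dot u v1.
Proof.
move=> Vu; apply: sum_ext => i; rewrite /v1; case: excluded_middle_informative => Ci /=; first ring.
by rewrite Vu //; ring.
Qed.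

Lemma Np_pos : 0 < N p.
Proof.
case: (N_nonneg HN p) => // /esym H; have := N_zero HN H i0; have := p_pos Ci0; lra.
Qed.

Definition X := fun x => Lp x /\ Kcoord C x /\ N x = 1.

Lemma X_ne : exists x, X x.
Proof.
have Np := Np_pos.
exists (vscale (/ N p) p); split; first by apply: Lp_scale.
split.
  apply: Lp_nonneg_K; first by apply: Lp_scale.
  move=> i; rewrite /vscale; case: (classic (C i)) => Ci.
    apply: Rmult_le_pos; [apply: Rlt_le; apply: Rinv_0_lt_compat => // | apply: Rlt_le; exact: p_pos].
  by rewrite (Lp_V Lp_p Ci); lra.
rewrite N_scale // Rabs_pos_eq; [field; lra | apply: Rlt_le; apply: Rinv_0_lt_compat; lra].
Qed.

Lemma X_bounded : exists M, forall x, X x -> forall i, Rabs (x i) <= M.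
Proof. have [M HM] := bounded_N1; exists M => x [_ [_ Nx]]; apply: HM; lra. Qed.

Lemma X_closed : closedS X.
Proof.
apply: closed_and => //; apply: closed_and; first exact: K_closed.
by apply: closed_eq2; [exact: Lip_N | exact: Lip_const].
Qed.

Lemma normalize x : Lp x -> Kcoord C x -> 0 < N x -> X (vscale (/ N x) x).
Proof.
move=> Lx Kx Nx; split; first by apply: Lp_scale.
split.
  apply: Lp_nonneg_K; first by apply: Lp_scale.
  move=> i; rewrite /vscale; apply: Rmult_le_pos; [apply: Rlt_le; apply: Rinv_0_lt_compat => // | exact: K_nonneg].
rewrite N_scale // Rabs_pos_eq; [field; lra | apply: Rlt_le; apply: Rinv_0_lt_compat; lra].
Qed.

Lemma N_pos_of x i : x i <> 0 -> 0 < N x.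
Proof. move=> H; case: (N_nonneg HN x) => // /esym E; exfalso; apply: H; exact (N_zero HN E i). Qed.

Lemma lambda_ge (v x : vec n) t : Kcoord C (vsub x (vscale t v)) ->
  (exists j, C j /\ 0 < v j) -> exists b, LambdaIs (Kcoord C) v x b /\ t <= b.
Proof.
move=> Ht [j [Cj vj]].
have [b Hb] : exists b, LambdaIs (Kcoord C) v x b.
  apply: lub_exists; first by exists t.
  exists (x j / v j) => s [_ Hs]; have := Hs j Cj; rewrite /vsub /vscale => h.
  apply: (Rmult_le_reg_r (v j)) => //; field_simplify; lra.
exists b; split => //; case: Hb => Hb _; exact: Hb.
Qed.

Lemma nu_lower_gen (Nt : vec n -> R) (x : vec n) (r : R) u y a :
  Lp x -> N x = 1 -> r <= dot u x ->
  (forall z, Lp z -> dot z y = 0) -> DualNormIs (Vcoord C) N (vsub u y) a -> r <= a.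
Proof.
move=> Lx Nx Hr Hy Ha.
have := dual_ge Ha (Lp_V Lx); rewrite Nx Rmult_1_r dot_subl (dot_sym y x) (Hy _ Lx); lra.
Qed.

Lemma dualInf u : Kcoord C u -> DualNormIs (Vcoord C) (@norm_inf n) u (\big[Rplus/0]_(i < n) u i).
Proof.
move=> [Vu Ku]; split.
  exists v1; split; first by case: v1_K.
  split; last by rewrite sum_V.
  apply: Rle_antisym.
    apply: nI_le; [lra | move=> i; rewrite /v1; case: excluded_middle_informative => _ /=; rewrite ?Rabs_R1 ?Rabs_R0; lra].
  by have := nI_ge v1 i0; rewrite v1_C // Rabs_R1.
move=> a [x [Vx [Nx ->]]]; apply: sum_le => i.
case: (classic (C i)) => Ci; last by rewrite Vu //; lra.
have := nI_ge x i; rewrite Nx => h; have := Rle_abs (x i); have := Ku i Ci; nra.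
Qed.

Theorem gen_a (M : vec n -> Prop) : (forall x, M x /\ Defs.nonneg x <-> Lp x /\ Defs.nonneg x) ->
  exists r, SigmaIs (Kcoord C) Lp N (@norm_inf n) r /\
            NuIs (Vcoord C) (Kcoord C) Lp N (@norm_inf n) r /\
            RhsMaxMin M C N r.
Proof.
move=> HM.
have [xs [[Lxs [Kxs Nxs]] Hxs]] := evt X_ne X_bounded X_closed Lip_minC.
pose R := minC xs.
have R0 : 0 <= R by rewrite /R; have [j [Cj ->]] := minC_att xs; case: Kxs => _ H; apply: H.
have PR : forall x, Lp x -> minC x <= R * N x.
  move=> x Lx; case: (Rle_or_lt (minC x) 0) => h; first by have := N_nonneg HN x; nra.
  have Kx : Kcoord C x by split; [exact: Lp_V | move=> i Ci; have := minC_le x Ci; lra].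
  have Nx : 0 < N x.
    have [j [Cj Ej]] := minC_att x; apply: (N_pos_of (i:=j)); lra.
  have := Hxs _ (normalize Lx Kx Nx); rewrite minC_scale; last by apply: Rinv_0_lt_compat.
  rewrite -/R => h2; have := Rmult_le_compat_r (N x) _ _ (Rlt_le _ _ Nx) h2.
  have -> : / N x * minC x * N x = minC x by field; lra.
  done.
exists R; split; last split.
-
  have lam1 : forall x, Lp x -> LambdaIs (Kcoord C) v1 x (minC x).
    move=> x Lx; split.
      move=> s [_ Hs]; have [j [Cj ->]] := minC_att x; have := Hs j Cj.
      rewrite /vsub /vscale v1_C //; lra.
    move=> b Hb; apply: Hb; split.
      move=> i nC; rewrite /vsub /vscale (Lp_V Lx nC); case: v1_K => H _; rewrite H //; ring.
    move=> i Ci; rewrite /vsub /vscale v1_C //; have := minC_le x Ci; lra.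
  split.
    exists v1; split; first exact: v1_K.
    split.
      apply: Rle_antisym.
        apply: nI_le; [lra | move=> i; rewrite /v1; case: excluded_middle_informative => _ /=; rewrite ?Rabs_R1 ?Rabs_R0; lra].
      by have := nI_ge v1 i0; rewrite v1_C // Rabs_R1.
    split.
      exists xs; split => //; split; [lra | exact: lam1].
    move=> b [x [Lx [Nx Hb]]]; rewrite (lub_unique Hb (lam1 _ Lx)).
    have := PR _ Lx; nra.
  move=> a [v [Kv [Nv [_ Ha]]]].
  have [j [Cj vj]] : exists j, C j /\ 0 < v j.
    have [j Hj] := nI_att i0 v; rewrite Nv in Hj.
    case: (classic (C j)) => Cj; last by move: Hj; rewrite (proj1 Kv j Cj) Rabs_R0; lra.
    exists j; split => //; have h := proj2 Kv j Cj; rewrite Rabs_pos_eq // in Hj; lra.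
  have [b [Hb Rb]] : exists b, LambdaIs (Kcoord C) v xs b /\ R <= b.
    apply: lambda_ge; last by exists j.
    split.
      move=> i nC; rewrite /vsub /vscale (Lp_V Lxs nC) (proj1 Kv i nC); ring.
    move=> i Ci; rewrite /vsub /vscale.
    have := minC_le xs Ci; have := nI_ge v i; rewrite Nv Rabs_pos_eq; last by apply: (proj2 Kv).
    have := proj2 Kv i Ci; rewrite -/R; nra.
  have := Ha b; have : b <= a by apply: Ha; exists xs; split => //; split => //; lra.
  lra.
-
  have low : forall u y a, Kcoord C u -> Vcoord C y -> (forall x, Lp x -> dot x y = 0) ->
      DualNormIs (Vcoord C) (@norm_inf n) u 1 -> DualNormIs (Vcoord C) N (vsub u y) a -> R <= a.
    move=> u y a Ku Vy Hy Hu Ha; apply: (nu_lower_gen (@norm_inf n) Lxs Nxs _ Hy Ha).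
    have Su := IsMax_unique Hu (dualInf Ku).
    have -> : R = R * \big[Rplus/0]_(i < n) u i by rewrite -Su; ring.
    rewrite -sum_scale; apply: sum_le => i.
    case: (classic (C i)) => Ci; last by rewrite (proj1 Ku i Ci); lra.
    have := minC_le xs Ci; have := proj2 Ku i Ci; rewrite -/R; nra.
  split; last by move=> a [u [y [Ku [Vy [Hy [Hu Ha]]]]]]; apply: (low u y).
  pose S := fun z a => exists x, Lp x /\ exists s, (forall i, C i -> z i + s <= x i) /\ R * N x - s <= a.
  have [g Hg] : exists g : vec n, forall z a, S z a -> dot g z <= a.
    apply: HB.
    - move=> z; exists (R * N (@vzero n) + \big[Rplus/0]_(i < n) Rabs (z i)).
      exists (@vzero n); split; first exact: Lp0.
      exists (- \big[Rplus/0]_(i < n) Rabs (z i)); split; last lra.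
      move=> i _; rewrite /vzero; have := sum_ge_one (F := fun i => Rabs (z i)) i (fun i => Rabs_pos _).
      have := Rle_abs (z i); lra.
    - move=> z w a b [x [Lx [s [Hs Ha]]]] [x' [Lx' [s' [Hs' Hb]]]].
      exists (vadd x x'); split; first exact: Lp_add.
      exists (s + s'); split; first by move=> i Ci; rewrite /vadd; have := Hs i Ci; have := Hs' i Ci; lra.
      have := N_tri HN x x'; nra.
    - move=> c z a c0 [x [Lx [s [Hs Ha]]]]; exists (vscale c x); split; first exact: Lp_scale.
      exists (c * s); split; first by move=> i Ci; rewrite /vscale; have := Hs i Ci; nra.
      rewrite N_scale // Rabs_pos_eq; [nra | lra].
    - move=> a [x [Lx [s [Hs Ha]]]].
      case: (Rle_or_lt s 0) => hs; first by have := N_nonneg HN x; nra.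
      have : s <= minC x by apply: minC_ge => i Ci; have := Hs i Ci; rewrite /vzero; lra.
      have := PR _ Lx; lra.
  pose w := piC g.
  have Kw : Kcoord C w.
    split; first exact: piC_V.
    move=> j Cj; rewrite /w /piC; case: excluded_middle_informative => Hcj /=; last by lra.
    have : S (vscale (-1) (unitv j)) 0.
      exists (@vzero n); split; first exact: Lp0.
      exists 0; split; last by rewrite N_0 //; lra.
      move=> i _; rewrite /vscale /unitv /vzero; case: (i == j); lra.
    move=> /Hg; rewrite dot_scaler /dot (sum_one (j:=j)) /unitv ?eqxx.
      lra.
    by move=> i /eqP /negbTE ->; ring.
  have Sw : 1 <= \big[Rplus/0]_(i < n) w i.
    rewrite sum_V; last exact: (proj1 Kw).
    rewrite /w dot_piC; last exact: (proj1 v1_K).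
    have : S (vscale (-1) v1) (-1).
      exists (@vzero n); split; first exact: Lp0.
      exists 1; split; last by rewrite N_0 //; lra.
      by move=> i Ci; rewrite /vscale v1_C // /vzero; lra.
    move=> /Hg; rewrite dot_scaler; lra.
  have Hwl : forall x, Lp x -> dot w x <= R * N x.
    move=> x Lx; rewrite dot_piC; last exact: Lp_V.
    apply: Hg; exists x; split => //; exists 0; split; [move=> i _; lra | lra].
  have [h [Hh1 Hh2]] := Ext R0 Hwl.
  pose sw := \big[Rplus/0]_(i < n) w i.
  have sw0 : 0 < sw by rewrite /sw; lra.
  pose u := vscale (/ sw) w.
  pose y := vscale (/ sw) (vsub w (piC h)).
  have Ku : Kcoord C u.
    split; first by move=> i nC; rewrite /u /vscale (proj1 Kw i nC); ring.
    move=> i Ci; rewrite /u /vscale; apply: Rmult_le_pos; [apply: Rlt_le; apply: Rinv_0_lt_compat => // | exact: (proj2 Kw)].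
  have Vy : Vcoord C y by move=> i nC; rewrite /y /vscale /vsub (proj1 Kw i nC) (piC_V h nC); ring.
  have Hy : forall x, Lp x -> dot x y = 0.
    move=> x Lx; rewrite /y dot_scaler dot_subr !(dot_sym x) dot_piC; last exact: Lp_V.
    rewrite Hh1 //; ring.
  have Hu : DualNormIs (Vcoord C) (@norm_inf n) u 1.
    have := dualInf Ku; rewrite /u sum_scale -/sw Rinv_l //; lra.
  have Euy : vsub u y = vscale (/ sw) (piC h).
    by apply: functional_extensionality => i; rewrite /u /y /vscale /vsub; ring.
  have [d Hd] := dual_exists (vsub u y).
  have dR : d <= R.
    apply: (dual_le Hd) => z Vz; rewrite Euy dot_scalel dot_piC //.
    have := Hh2 z; have := N_nonneg HN z; have : / sw <= 1.
      apply: (Rle_trans _ (/ 1)); [apply: Rinv_le_contravar; [lra | exact: Sw] | rewrite Rinv_1; lra].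
    have : 0 < / sw by apply: Rinv_0_lt_compat.
    move=> h1 h2 h3 h4; have h5 := Rmult_le_pos _ _ R0 h3; nra.
  have Rd : R <= d by apply: (low u y).
  have -> : R = d by lra.
  by exists u, y; do !split => //; exact: (proj1 Ku).
-
  split.
    exists xs; split; first exact: (proj1 (proj2 (HM xs) (conj Lxs (K_nonneg Kxs)))).
    split; first exact: K_nonneg.
    split => //; exact: minC_spec.
  move=> a [x [Mx [nx [Nx Ha]]]].
  have Lx : Lp x by case: (proj1 (HM x) (conj Mx nx)).
  rewrite (IsMin_unique Ha (minC_spec x)); have := PR _ Lx; rewrite Nx; lra.
Qed.

Lemma nu_construct w r mu : Kcoord C w -> 0 <= r -> 1 <= mu -> (forall x, Lp x -> dot w x <= r * N x) ->
  exists y d, Vcoord C y /\ (forall x, Lp x -> dot x y = 0) /\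
    DualNormIs (Vcoord C) N (vsub (vscale (/ mu) w) y) d /\ d <= r.
Proof.
move=> Kw r0 mu1 Hwl.
have [h [Hh1 Hh2]] := Ext r0 Hwl.
have mu0 : 0 < mu by lra.
pose y := vscale (/ mu) (vsub w (piC h)).
have Vy : Vcoord C y by move=> i nC; rewrite /y /vscale /vsub (proj1 Kw i nC) (piC_V h nC); ring.
have Hy : forall x, Lp x -> dot x y = 0.
  move=> x Lx; rewrite /y dot_scaler dot_subr !(dot_sym x) dot_piC; last exact: Lp_V.
  rewrite Hh1 //; ring.
have Euy : vsub (vscale (/ mu) w) y = vscale (/ mu) (piC h).
  by apply: functional_extensionality => i; rewrite /y /vscale /vsub; ring.
have [d Hd] := dual_exists (vsub (vscale (/ mu) w) y).
exists y, d; do !split => //.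
apply: (dual_le Hd) => z Vz; rewrite Euy dot_scalel dot_piC //.
have := Hh2 z; have := N_nonneg HN z; have : / mu <= 1.
  apply: (Rle_trans _ (/ 1)); [apply: Rinv_le_contravar; lra | rewrite Rinv_1; lra].
have : 0 < / mu by apply: Rinv_0_lt_compat.
move=> h1 h2 h3 h4; have h5 := Rmult_le_pos _ _ r0 h3; nra.
Qed.

Lemma Lp_vsum r (f : 'I_n -> vec n) : (forall j, Lp (f j)) -> Lp (vsum r f).
Proof.
move=> H; elim: r => [|a r IH].
  have -> : vsum [::] f = @vzero n by apply: functional_extensionality => i; rewrite /vsum big_nil.
  exact: Lp0.
have -> : vsum (a :: r) f = vadd (f a) (vsum r f).
  by apply: functional_extensionality => i; rewrite /vsum /vadd big_cons.
by apply: Lp_add.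
Qed.

Lemma unitv_K j : C j -> Kcoord C (unitv j).
Proof.
move=> Cj; split.
  move=> i nC; rewrite /unitv; case: eqP => // E; rewrite E in nC; contradiction.
by move=> i _; rewrite /unitv; case: (i == j); lra.
Qed.

Lemma dual1 u j : Kcoord C u -> C j -> (forall i, C i -> u i <= u j) ->
  DualNormIs (Vcoord C) (@norm_1 n) u (u j).
Proof.
move=> [Vu Ku] Cj Hj; split.
  exists (unitv j); split; first exact: (proj1 (unitv_K Cj)).
  split.
    rewrite /norm_1 (sum_one (j:=j)) /unitv ?eqxx ?Rabs_R1 //.
    by move=> i /eqP /negbTE ->; rewrite Rabs_R0.
  rewrite /dot (sum_one (j:=j)) /unitv ?eqxx; first ring.
  by move=> i /eqP /negbTE ->; ring.
move=> a [x [Vx [Nx ->]]].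
suff : dot u x <= u j * norm_1 x by rewrite Nx; lra.
rewrite /norm_1 -sum_scale; apply: sum_le => i; case: (classic (C i)) => Ci; last first.
  rewrite Vu //; have := Rabs_pos (x i); have := Ku j Cj; nra.
have := Rle_abs (x i); have := Hj i Ci; have := Ku i Ci; have := Rabs_pos (x i); nra.
Qed.

Lemma p_dom (z : vec n) : exists t, forall i, C i -> z i <= t * p i.
Proof.
have mp : 0 < minC p by have [j [Cj ->]] := minC_att p; exact: p_pos.
exists (\big[Rplus/0]_(i < n) Rabs (z i) / minC p) => i Ci.
have := sum_ge_one (F := fun i => Rabs (z i)) i (fun i => Rabs_pos _).
have := Rle_abs (z i); have := minC_le p Ci.
have : 0 <= \big[Rplus/0]_(i < n) Rabs (z i) / minC p.
  apply: Rmult_le_pos; [apply: sum_nonneg => k; apply: Rabs_pos | apply: Rlt_le; apply: Rinv_0_lt_compat => //].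
move=> h1 h2 h3 h4.
have : \big[Rplus/0]_(i < n) Rabs (z i) / minC p * minC p = \big[Rplus/0]_(i < n) Rabs (z i) by field; lra.
nra.
Qed.

Theorem gen_b (M : vec n -> Prop) : (forall x, M x /\ Defs.nonneg x <-> Lp x /\ Defs.nonneg x) ->
  exists r, SigmaIs (Kcoord C) Lp N (@norm_1 n) r /\
            NuIs (Vcoord C) (Kcoord C) Lp N (@norm_1 n) r /\
            RhsMinMax M C N r.
Proof.
move=> HM.
have Hex : forall j, exists x, X x /\ forall y, X y -> y j <= x j.
  move=> j; apply: evt; [exact: X_ne | exact: X_bounded | exact: X_closed | exact: Lip_coord].
pose Mx := fun j => proj1_sig (constructive_indefinite_description _ (Hex j)).
have HMx : forall j, X (Mx j) /\ forall y, X y -> y j <= Mx j j.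
  by move=> j; rewrite /Mx; case: constructive_indefinite_description.
pose Mv := fun j => Mx j j.
have Mv0 : forall j, C j -> 0 <= Mv j by move=> j Cj; case: (HMx j) => [[_ [Kx _]] _]; exact: (proj2 Kx).
have PM : forall j x, Lp x -> Kcoord C x -> x j <= Mv j * N x.
  move=> j x Lx Kx; case: (N_nonneg HN x) => Nx; last first.
    rewrite (N_zero HN (esym Nx)); rewrite -Nx; lra.
  have := proj2 (HMx j) _ (normalize Lx Kx Nx); rewrite /vscale -/(Mv j) => h.
  have := Rmult_le_compat_r (N x) _ _ (Rlt_le _ _ Nx) h.
  have -> : / N x * x j * N x = x j by field; lra.
  by rewrite Rmult_comm.
have [ist [Cis His]] := finMin Mv.
pose Rb := Mv ist.
have Rb0 : 0 <= Rb by apply: Mv0.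
have lamb : forall j x, C j -> Lp x -> Defs.nonneg x -> LambdaIs (Kcoord C) (unitv j) x (x j).
  move=> j x Cj Lx nx; split.
    move=> s [_ Hs]; have := Hs j Cj; rewrite /vsub /vscale /unitv eqxx; lra.
  move=> b Hb; apply: Hb; split.
    move=> i nC; rewrite /vsub /vscale (Lp_V Lx nC) (proj1 (unitv_K Cj) i nC); ring.
  move=> i Ci; rewrite /vsub /vscale /unitv; case: eqP => [->|_]; first lra.
  by have := nx i; lra.
exists Rb; split; last split.
-
  split.
    exists (unitv ist); split; first exact: unitv_K.
    split.
      rewrite /norm_1 (sum_one (j:=ist)) /unitv ?eqxx ?Rabs_R1 //.
      by move=> i /eqP /negbTE ->; rewrite Rabs_R0.
    split.
      case: (HMx ist) => [[Lx [Kx Nx]] _].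
      exists (Mx ist); split => //; split; first lra.
      exact: (lamb _ _ Cis Lx (K_nonneg Kx)).
    move=> b [x [Lx [Nx Hb]]].
    have [s [_ Hs]] := lub_nonempty Hb.
    have ub : b <= x ist.
      case: Hb => _ H; apply: H => t [_ Ht]; have := Ht ist Cis; rewrite /vsub /vscale /unitv eqxx; lra.
    case: (Rle_or_lt (x ist) 0) => hx; first lra.
    have Kx : Kcoord C x.
      split; first exact: Lp_V.
      move=> i Ci; have := Hs i Ci; rewrite /vsub /vscale /unitv; case: eqP => [->|_]; lra.
    have := PM ist x Lx Kx; rewrite -/Rb; nra.
  move=> a [v [Kv [Nv [_ Ha]]]].
  have nv := K_nonneg Kv.
  have Sv : \big[Rplus/0]_(i < n) v i = 1.
    rewrite -Nv /norm_1; apply: sum_ext => i; rewrite Rabs_pos_eq //.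
  pose x := vsum (index_enum 'I_n) (fun j => vscale (v j) (Mx j)).
  have Lx : Lp x by apply: Lp_vsum => j; apply: Lp_scale; case: (HMx j) => [[? _] _].
  have Nx : N x <= 1.
    apply: (Rle_trans _ _ _ (N_vsum HN _ _)); rewrite -Sv.
    apply: sum_le => j; rewrite N_scale // Rabs_pos_eq //.
    by case: (HMx j) => [[_ [_ ->]] _]; lra.
  have xi : forall i, x i = \big[Rplus/0]_(j < n) (v j * Mx j i) by [].
  have [j [Cj vj]] : exists j, C j /\ 0 < v j.
    apply: NNPP => H.
    have : \big[Rplus/0]_(i < n) v i = 0.
      apply: sum_zero => i; case: (classic (C i)) => Ci; last exact: (proj1 Kv).
      have := nv i; case => // hv; exfalso; apply: H; by exists i.
    lra.
  have [b [Hb Rbb]] : exists b, LambdaIs (Kcoord C) v x b /\ Rb <= b.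
    apply: lambda_ge; last by exists j.
    split.
      move=> i nC; rewrite /vsub /vscale xi (proj1 Kv i nC) sum_zero; first ring.
      move=> k; case: (HMx k) => [[Lk _] _]; rewrite (Lp_V Lk nC); ring.
    move=> i Ci; rewrite /vsub /vscale xi.
    have := @sum_ge_one _ (fun k => v k * Mx k i) i.
    have hnn : forall k, 0 <= v k * Mx k i.
      by move=> k; apply: Rmult_le_pos => //; case: (HMx k) => [[_ [Kk _]] _]; exact: (proj2 Kk).
    move=> /(_ hnn) h; have h2 := His i Ci; have h3 := nv i.
    rewrite /Rb /Mv in h2 *; nra.
  have : b <= a by apply: Ha; exists x; split => //; split => //.
  lra.
-
  have low : forall u y a, Kcoord C u -> (forall x, Lp x -> dot x y = 0) ->
      DualNormIs (Vcoord C) (@norm_1 n) u 1 -> DualNormIs (Vcoord C) N (vsub u y) a -> Rb <= a.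
    move=> u y a Ku Hy Hu Ha.
    have [j [Cj Hj]] := finMax u.
    have uj := IsMax_unique Hu (dual1 Ku Cj Hj).
    case: (HMx j) => [[Lj [Kj Nj]] _].
    apply: (nu_lower_gen (@norm_1 n) Lj Nj _ Hy Ha).
    have := @sum_ge_one _ (fun k => u k * Mx j k) j.
    have hnn : forall k, 0 <= u k * Mx j k.
      by move=> k; apply: Rmult_le_pos; [exact: K_nonneg | exact: K_nonneg].
    move=> /(_ hnn) h; rewrite -/(dot u (Mx j)) -uj Rmult_1_l in h.
    have := His j Cj; rewrite -/(Mv j) -/Rb; rewrite /Mv in h |- *; lra.
  split; last by move=> a [u [y [Ku [Vy [Hy [Hu Ha]]]]]]; apply: (low u y).
  pose S := fun z a => exists x, Lp x /\ exists s, (forall i, C i -> z i + s * unitv ist i <= x i) /\ Rb * N x - s <= a.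
  have [g Hg] : exists g : vec n, forall z a, S z a -> dot g z <= a.
    apply: HB.
    - move=> z; have [t Ht] := p_dom z.
      exists (Rb * N (vscale t p)); exists (vscale t p); split; first exact: Lp_scale.
      exists 0; split; last lra.
      by move=> i Ci; rewrite /vscale; have := Ht i Ci; lra.
    - move=> z w a b [x [Lx [s [Hs Ha]]]] [x' [Lx' [s' [Hs' Hb]]]].
      exists (vadd x x'); split; first exact: Lp_add.
      exists (s + s'); split; first by move=> i Ci; rewrite /vadd; have := Hs i Ci; have := Hs' i Ci; lra.
      have := N_tri HN x x'; nra.
    - move=> c z a c0 [x [Lx [s [Hs Ha]]]]; exists (vscale c x); split; first exact: Lp_scale.
      exists (c * s); split; first by move=> i Ci; rewrite /vscale; have := Hs i Ci; nra.
      rewrite N_scale // Rabs_pos_eq; [nra | lra].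
    - move=> a [x [Lx [s [Hs Ha]]]].
      case: (Rle_or_lt s 0) => hs; first by have := N_nonneg HN x; nra.
      have Kx : Kcoord C x.
        split; first exact: Lp_V.
        move=> i Ci; have := Hs i Ci; rewrite /vzero /unitv; case: (i == ist); lra.
      have := Hs ist Cis; rewrite /vzero /unitv eqxx.
      have := PM ist x Lx Kx; rewrite -/Rb; lra.
  pose w := piC g.
  have Kw : Kcoord C w.
    split; first exact: piC_V.
    move=> j Cj; rewrite /w /piC; case: excluded_middle_informative => Hcj /=; last by lra.
    have : S (vscale (-1) (unitv j)) 0.
      exists (@vzero n); split; first exact: Lp0.
      exists 0; split; last by rewrite N_0 //; lra.
      move=> i _; rewrite /vscale /unitv /vzero; case: (i == j); lra.
    move=> /Hg; rewrite dot_scaler /dot (sum_one (j:=j)) /unitv ?eqxx.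
      lra.
    by move=> i /eqP /negbTE ->; ring.
  have wis : 1 <= w ist.
    rewrite /w /piC; case: excluded_middle_informative => Hc /=; last by contradiction.
    have : S (vscale (-1) (unitv ist)) (-1).
      exists (@vzero n); split; first exact: Lp0.
      exists 1; split; last by rewrite N_0 //; lra.
      move=> i _; rewrite /vscale /unitv /vzero; case: (i == ist); lra.
    move=> /Hg; rewrite dot_scaler /dot (sum_one (j:=ist)) /unitv ?eqxx.
      lra.
    by move=> i /eqP /negbTE ->; ring.
  have Hwl : forall x, Lp x -> dot w x <= Rb * N x.
    move=> x Lx; rewrite dot_piC; last exact: Lp_V.
    apply: Hg; exists x; split => //; exists 0; split; [move=> i _; lra | lra].
  have [jm [Cjm Hjm]] := finMax w.
  have mu1 : 1 <= w jm by have := Hjm ist Cis; lra.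
  have [y [d [Vy [Hy [Hd dR]]]]] := nu_construct Kw Rb0 mu1 Hwl.
  pose u := vscale (/ w jm) w.
  have Ku : Kcoord C u.
    split; first by move=> i nC; rewrite /u /vscale (proj1 Kw i nC); ring.
    move=> i Ci; rewrite /u /vscale; apply: Rmult_le_pos; [apply: Rlt_le; apply: Rinv_0_lt_compat; lra | exact: (proj2 Kw)].
  have Hu : DualNormIs (Vcoord C) (@norm_1 n) u 1.
    have := @dual1 u jm Ku Cjm.
    have -> : u jm = 1 by rewrite /u /vscale Rinv_l //; lra.
    apply => i Ci; rewrite /u /vscale; apply: (Rle_trans _ (/ w jm * w jm)).
      apply: Rmult_le_compat_l; [apply: Rlt_le; apply: Rinv_0_lt_compat; lra | exact: Hjm].
    rewrite Rinv_l; lra.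
  have Rd : Rb <= d by apply: (low u y).
  have -> : Rb = d by lra.
  by exists u, y; do !split => //; exact: (proj1 Ku).
-
  have Mi : forall i, C i -> IsMax (fun b => exists x, M x /\ Defs.nonneg x /\ N x = 1 /\ b = x i) (Mv i).
    move=> i Ci; case: (HMx i) => [[Lx [Kx Nx]] Hx]; split.
      exists (Mx i); split; first exact: (proj1 (proj2 (HM _) (conj Lx (K_nonneg Kx)))).
      by split; [exact: K_nonneg | split].
    move=> b [x [Mxx [nx [Nx' ->]]]].
    have Lx' : Lp x by case: (proj1 (HM x) (conj Mxx nx)).
    apply: Hx; split => //; split => //; exact: Lp_nonneg_K.
  split; first by exists ist; split => //; exact: Mi.
  move=> a [i [Ci Ha]]; rewrite (IsMax_unique Ha (Mi i Ci)); exact: His.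
Qed.

Lemma dual_nonneg w d : DualNormIs (Vcoord C) N w d -> 0 <= d.
Proof.
move=> Hd; have [x [Vx Nx]] := unit_exists.
have Vx' : Vcoord C (vscale (-1) x) by move=> i nC; rewrite /vscale Vx //; ring.
have h1 := dual_ge Hd Vx; have h2 := dual_ge Hd Vx'.
rewrite dot_scaler N_scale // Rabs_Ropp Rabs_R1 Nx in h2; rewrite Nx in h1; lra.
Qed.

Lemma dot_K_nonneg a b : Kcoord C a -> Kcoord C b -> 0 <= dot a b.
Proof.
move=> Ka Kb; apply: sum_nonneg => i; apply: Rmult_le_pos; exact: K_nonneg.
Qed.

Lemma posK u : Kcoord C u -> 0 < N u -> exists j, C j /\ 0 < u j.
Proof.
move=> Ku Nu; apply: NNPP => H.
have : u = @vzero n.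
  apply: functional_extensionality => i; rewrite /vzero.
  case: (classic (C i)) => Ci; last exact: (proj1 Ku).
  have := proj2 Ku i Ci; case => // h; exfalso; apply: H; by exists i.
move=> E; rewrite E N_0 // in Nu; lra.
Qed.

Lemma dot_pos_p u : Kcoord C u -> 0 < N u -> 0 < dot u p.
Proof.
move=> Ku Nu; have [j [Cj uj]] := posK Ku Nu.
have h := @sum_ge_one _ (fun k => u k * p k) j.
have hnn : forall k, 0 <= u k * p k.
  move=> k; case: (classic (C k)) => Ck; last by rewrite (proj1 Ku k Ck); lra.
  apply: Rmult_le_pos; [exact: (proj2 Ku) | apply: Rlt_le; exact: p_pos].
have := h hnn; rewrite -/(dot u p); have := p_pos Cj; nra.
Qed.

Section L2.
Hypothesis HN2 : forall x : vec n, N x = sqrt (dot x x).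

Lemma dot_self x : dot x x = N x * N x.
Proof. rewrite HN2 sqrt_sqrt //; apply: sum_nonneg => i; nra. Qed.

Lemma dot_sub_sub (a b : vec n) : dot (vsub a b) (vsub a b) = dot a a - 2 * dot a b + dot b b.
Proof. rewrite dot_subl !dot_subr (dot_sym b a); ring. Qed.

Lemma CS x y : dot x y <= N x * N y.
Proof.
case: (N_nonneg HN x) => ax; last first.
  have -> : x = @vzero n by apply: functional_extensionality => i; apply: (N_zero HN); rewrite -ax.
  rewrite dot0l; have := N_nonneg HN y; rewrite N_0 //; lra.
case: (N_nonneg HN y) => ay; last first.
  have -> : y = @vzero n by apply: functional_extensionality => i; apply: (N_zero HN); rewrite -ay.
  rewrite dot0r; have := N_nonneg HN x; rewrite N_0 //; lra.
have := dot_self (vsub (vscale (/ N x) x) (vscale (/ N y) y)).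
rewrite dot_sub_sub !dot_scalel !dot_scaler !dot_self.
have h := Rmult_le_pos _ _ (N_nonneg HN (vsub (vscale (/ N x) x) (vscale (/ N y) y))) (N_nonneg HN (vsub (vscale (/ N x) x) (vscale (/ N y) y))).
move=> E; rewrite -E in h.
have e1 : / N x * (/ N x * (N x * N x)) = 1 by field; lra.
have e2 : / N y * (/ N y * (N y * N y)) = 1 by field; lra.
rewrite e1 e2 in h.
have : / N x * (/ N y * dot x y) <= 1 by lra.
move=> h2; have := Rmult_le_compat_l (N x * N y) _ _ (Rlt_le _ _ (Rmult_lt_0_compat _ _ ax ay)) h2.
have -> : N x * N y * (/ N x * (/ N y * dot x y)) = dot x y by field; lra.
lra.
Qed.

Lemma dual2 w : Vcoord C w -> DualNormIs (Vcoord C) N w (N w).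
Proof.
move=> Vw; split; last first.
  move=> a [x [Vx [Nx ->]]]; have := CS w x; rewrite Nx; lra.
case: (N_nonneg HN w) => Nw; last first.
  have [x [Vx Nx]] := unit_exists; exists x; do !split => //.
  have -> : w = @vzero n by apply: functional_extensionality => i; apply: (N_zero HN); rewrite -Nw.
  by rewrite dot0l N_0.
exists (vscale (/ N w) w); split; first by move=> i nC; rewrite /vscale Vw //; ring.
split.
  rewrite N_scale // Rabs_pos_eq; [field; lra | apply: Rlt_le; apply: Rinv_0_lt_compat; lra].
rewrite dot_scaler dot_self; field; lra.
Qed.

Theorem gen_c (M : vec n -> Prop) : (forall x, M x /\ Defs.nonneg x <-> Lp x /\ Defs.nonneg x) ->
  exists r, SigmaIs (Kcoord C) Lp N N r /\
            NuIs (Vcoord C) (Kcoord C) Lp N N r /\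
            IsMin (fun a => exists u, Kcoord C u /\ N u = 1 /\
               IsMax (fun b => exists x, M x /\ Defs.nonneg x /\ N x = 1 /\ b = dot u x) a) r.
Proof.
move=> HM.
have [Mb HMb] := bounded_N1.
pose Y := fun x => Lp x /\ N x <= 1.
have Hphi : forall u, exists m, IsMax (fun b => exists x, Y x /\ b = dot u x) m.
  move=> u; have [x [Yx Hx]] : exists x, Y x /\ forall y, Y y -> dot u y <= dot u x.
    apply: evt.
    - exists (@vzero n); split; [exact: Lp0 | rewrite N_0 //; lra].
    - by exists Mb => x [_ Nx]; apply: HMb.
    - apply: closed_and => //; apply: closed_le2; [exact: Lip_N | exact: Lip_const].
    - exact: Lip_dot.
  exists (dot u x); split; first by exists x.
  by move=> b [y [Yy ->]]; apply: Hx.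
pose phi := fun u => proj1_sig (constructive_indefinite_description _ (Hphi u)).
have Pphi : forall u, IsMax (fun b => exists x, Y x /\ b = dot u x) (phi u).
  by move=> u; rewrite /phi; case: constructive_indefinite_description.
have phi_ge : forall u x, Y x -> dot u x <= phi u.
  by move=> u x Yx; case: (Pphi u) => _ H; apply: H; exists x.
have phi0 : forall u, 0 <= phi u.
  move=> u; have := phi_ge u (@vzero n); rewrite dot0r; apply; split; [exact: Lp0 | rewrite N_0 //; lra].
have phi_sc : forall u x, Lp x -> dot u x <= phi u * N x.
  move=> u x Lx; case: (N_nonneg HN x) => Nx; last first.
    have -> : x = @vzero n by apply: functional_extensionality => i; apply: (N_zero HN); rewrite -Nx.
    by rewrite dot0r N_0 //; lra.
  have := phi_ge u (vscale (/ N x) x); rewrite dot_scaler.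
  have Yx : Y (vscale (/ N x) x).
    split; first exact: Lp_scale.
    rewrite N_scale // Rabs_pos_eq; [right; field; lra | apply: Rlt_le; apply: Rinv_0_lt_compat; lra].
  move=> /(_ Yx) h; have := Rmult_le_compat_r (N x) _ _ (Rlt_le _ _ Nx) h.
  by have -> : / N x * dot u x * N x = dot u x by field; lra.
have Lip_phi : Lip phi.
  exists (\big[Rplus/0]_(i < n) Mb) => u u' d d0 H.
  have key : forall a b, (forall i, Rabs (b i - a i) <= d) -> phi a - (\big[Rplus/0]_(i < n) Mb) * d <= phi b.
    move=> a b Hab; case: (Pphi a) => [[x [[Lx Nx] ->]] _].
    have := phi_ge b x (conj Lx Nx).
    have : dot a x - dot b x <= (\big[Rplus/0]_(i < n) Mb) * d.
      rewrite -dot_subl Rmult_comm -sum_scale; apply: sum_le => i.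
      rewrite /vsub; have := Rle_abs ((a i - b i) * x i); rewrite Rabs_mult.
      have := HMb x Nx i; have := Hab i; rewrite Rabs_minus_sym.
      have := Rabs_pos (a i - b i); have := Rabs_pos (x i); nra.
    lra.
  have := key u u' H; have := key u' u (fun i => ltac:(rewrite Rabs_minus_sym; exact: H)).
  move=> h1 h2; apply: Rabs_le; lra.
pose U := fun u => Kcoord C u /\ N u = 1.
have [us [[Kus Nus] Hus]] : exists u, U u /\ forall v, U v -> phi u <= phi v.
  apply: evt_min.
  - have Nv1 : 0 < N v1.
      apply: (N_pos_of (i:=i0)); rewrite v1_C //; lra.
    exists (vscale (/ N v1) v1); split.
      split; first by move=> i nC; rewrite /vscale (proj1 v1_K i nC); ring.
      move=> i Ci; rewrite /vscale; apply: Rmult_le_pos; [apply: Rlt_le; apply: Rinv_0_lt_compat => // | exact: (proj2 v1_K)].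
    rewrite N_scale // Rabs_pos_eq; [field; lra | apply: Rlt_le; apply: Rinv_0_lt_compat; lra].
  - by exists Mb => u [_ Nu]; apply: HMb; lra.
  - apply: closed_and; [exact: K_closed | apply: closed_eq2; [exact: Lip_N | exact: Lip_const]].
  - exact: Lip_phi.
pose nu := phi us.
have nu_pos : 0 < nu.
  have Np := Np_pos.
  have := phi_ge us (vscale (/ N p) p); rewrite dot_scaler.
  have Yp : Y (vscale (/ N p) p).
    split; first exact: Lp_scale.
    rewrite N_scale // Rabs_pos_eq; [right; field; lra | apply: Rlt_le; apply: Rinv_0_lt_compat; lra].
  move=> /(_ Yp) h; have := dot_pos_p Kus ltac:(rewrite Nus; lra).
  have : 0 < / N p by apply: Rinv_0_lt_compat.
  rewrite /nu; nra.
have D : forall v, Kcoord C v -> N v = 1 -> exists x, Lp x /\ N x <= 1 /\ forall i, C i -> nu * v i <= x i.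
  move=> v Kv Nv.
  have [t Ht] := p_dom v.
  pose x0 := vscale t p.
  pose F := fun x => Lp x /\ (forall i, C i -> v i <= x i) /\ N x <= N x0.
  have [xm [[Lxm [Hxm Nxm]] Hmin]] : exists x, F x /\ forall y, F y -> N x <= N y.
    apply: evt_min.
    - exists x0; split; first exact: Lp_scale.
      by split; [move=> i Ci; rewrite /x0 /vscale; exact: Ht | lra].
    - have [c [c0 Hc]] := N_lower HN i0.
      exists (N x0 / c) => x [_ [_ Nx]] i; have := Hc x i.
      move=> h; apply: (Rmult_le_reg_l c) => //; field_simplify; lra.
    - apply: closed_and => //; apply: closed_and.
        apply: closed_all => i; apply: closed_imp; apply: closed_le2; [exact: Lip_const | exact: Lip_coord].
      apply: closed_le2; [exact: Lip_N | exact: Lip_const].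
    - exact: Lip_N.
  pose mu0 := N xm.
  have [j [Cj vj]] := posK Kv ltac:(rewrite Nv; lra).
  have mu0_pos : 0 < mu0 by apply: (N_pos_of (i:=j)); have := Hxm j Cj; lra.
  have Hmu : forall x, Lp x -> (forall i, C i -> v i <= x i) -> mu0 <= N x.
    move=> x Lx Hx; case: (Rle_or_lt (N x) (N x0)) => h; first by apply: Hmin.
    by have := Hmin x0 ltac:(split; [exact: Lp_scale | split; [move=> i Ci; exact: Ht | lra]]); rewrite /mu0; lra.
  pose S := fun z a => exists x, Lp x /\ exists s, (forall i, C i -> z i + s * v i <= x i) /\ N x - mu0 * s <= a.
  have [g Hg] : exists g : vec n, forall z a, S z a -> dot g z <= a.
    apply: HB.
    - move=> z; have [t' Ht'] := p_dom z.
      exists (N (vscale t' p)); exists (vscale t' p); split; first exact: Lp_scale.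
      exists 0; split; last lra.
      by move=> i Ci; rewrite /vscale; have := Ht' i Ci; lra.
    - move=> z w a b [x [Lx [s [Hs Ha]]]] [x' [Lx' [s' [Hs' Hb]]]].
      exists (vadd x x'); split; first exact: Lp_add.
      exists (s + s'); split; first by move=> i Ci; rewrite /vadd; have := Hs i Ci; have := Hs' i Ci; lra.
      have := N_tri HN x x'; nra.
    - move=> c z a c0 [x [Lx [s [Hs Ha]]]]; exists (vscale c x); split; first exact: Lp_scale.
      exists (c * s); split; first by move=> i Ci; rewrite /vscale; have := Hs i Ci; nra.
      rewrite N_scale // Rabs_pos_eq; [nra | lra].
    - move=> a [x [Lx [s [Hs Ha]]]].
      case: (Rle_or_lt s 0) => hs; first by have := N_nonneg HN x; nra.
      have := Hmu (vscale (/ s) x) (Lp_scale _ Lx).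
      have hx : forall i, C i -> v i <= vscale (/ s) x i.
        move=> i Ci; have := Hs i Ci; rewrite /vzero /vscale => h.
        apply: (Rmult_le_reg_l s) => //; field_simplify; lra.
      move=> /(_ hx); rewrite N_scale // Rabs_pos_eq; last by apply: Rlt_le; apply: Rinv_0_lt_compat.
      move=> h; have := Rmult_le_compat_l s _ _ (Rlt_le _ _ hs) h.
      have -> : s * (/ s * N x) = N x by field; lra.
      nra.
  pose w := piC g.
  have Kw : Kcoord C w.
    split; first exact: piC_V.
    move=> k Ck; rewrite /w /piC; case: excluded_middle_informative => Hck /=; last by lra.
    have : S (vscale (-1) (unitv k)) 0.
      exists (@vzero n); split; first exact: Lp0.
      exists 0; split; last by rewrite N_0 //; lra.
      move=> i _; rewrite /vscale /unitv /vzero; case: (i == k); lra.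
    move=> /Hg; rewrite dot_scaler /dot (sum_one (j:=k)) /unitv ?eqxx.
      lra.
    by move=> i /eqP /negbTE ->; ring.
  have wv : mu0 <= dot w v.
    rewrite dot_piC; last exact: (proj1 Kv).
    have : S (vscale (-1) v) (- mu0).
      exists (@vzero n); split; first exact: Lp0.
      exists 1; split; last by rewrite N_0 //; lra.
      by move=> i Ci; rewrite /vscale /vzero; lra.
    move=> /Hg; rewrite dot_scaler; lra.
  have Nw : mu0 <= N w by have := CS w v; rewrite Nv; lra.
  have Nw0 : 0 < N w by lra.
  have Uu : U (vscale (/ N w) w).
    split.
      split; first by move=> i nC; rewrite /vscale (proj1 Kw i nC); ring.
      move=> i Ci; rewrite /vscale; apply: Rmult_le_pos; [apply: Rlt_le; apply: Rinv_0_lt_compat => // | exact: (proj2 Kw)].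
    rewrite N_scale // Rabs_pos_eq; [field; lra | apply: Rlt_le; apply: Rinv_0_lt_compat; lra].
  have phiu : phi (vscale (/ N w) w) <= / N w.
    case: (Pphi (vscale (/ N w) w)) => [[x [[Lx Nx] ->]] _].
    rewrite dot_scalel dot_piC; last exact: Lp_V.
    have : dot g x <= N x by apply: Hg; exists x; split => //; exists 0; split; [move=> i _; lra | lra].
    have : 0 < / N w by apply: Rinv_0_lt_compat.
    nra.
  have numu : nu * mu0 <= 1.
    have h1 := Hus _ Uu; rewrite -/nu in h1.
    have h2 : / N w <= / mu0 by apply: Rinv_le_contravar.
    have : nu <= / mu0 by lra.
    move=> h; have := Rmult_le_compat_r mu0 _ _ (Rlt_le _ _ mu0_pos) h.
    by rewrite Rinv_l; lra.
  exists (vscale nu xm); split; first exact: Lp_scale.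
  split; first by rewrite N_scale // Rabs_pos_eq; [rewrite -/mu0; lra | lra].
  move=> i Ci; rewrite /vscale; apply: Rmult_le_compat_l; [lra | exact: Hxm].
have lamD : forall v, Kcoord C v -> N v = 1 -> exists x b, Lp x /\ N x <= 1 /\ LambdaIs (Kcoord C) v x b /\ nu <= b.
  move=> v Kv Nv; have [x [Lx [Nx Hx]]] := D v Kv Nv.
  have [b [Hb nub]] : exists b, LambdaIs (Kcoord C) v x b /\ nu <= b.
    apply: lambda_ge; last by apply: posK => //; lra.
    split.
      move=> i nC; rewrite /vsub /vscale (Lp_V Lx nC) (proj1 Kv i nC); ring.
    move=> i Ci; rewrite /vsub /vscale; have := Hx i Ci; lra.
  by exists x, b.
have ubus : forall x b, Lp x -> N x <= 1 -> LambdaIs (Kcoord C) us x b -> b <= nu.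
  move=> x b Lx Nx [_ H]; apply: H => s Ks.
  have := dot_K_nonneg Kus Ks; rewrite dot_subr dot_scaler dot_self Nus.
  have := phi_sc us x Lx; have := phi0 us; rewrite -/nu; nra.
have helperR : forall v, Kcoord C v -> N v = 1 ->
    exists x, M x /\ Defs.nonneg x /\ N x = 1 /\ nu <= dot v x.
  move=> v Kv Nv; have [x [Lx [Nx Hx]]] := D v Kv Nv.
  have Kd : Kcoord C (vsub x (vscale nu v)).
    split; first by move=> i nC; rewrite /vsub /vscale (Lp_V Lx nC) (proj1 Kv i nC); ring.
    by move=> i Ci; rewrite /vsub /vscale; have := Hx i Ci; lra.
  have dvx : nu <= dot v x.
    have := dot_K_nonneg Kv Kd; rewrite dot_subr dot_scaler dot_self Nv; lra.
  have Kx : Kcoord C x.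
    split; first exact: Lp_V.
    move=> i Ci; have := Hx i Ci; have := proj2 Kv i Ci; nra.
  have Nx0 : 0 < N x.
    case: (N_nonneg HN x) => // h; exfalso.
    have : x = @vzero n by apply: functional_extensionality => i; apply: (N_zero HN); rewrite -h.
    move=> E; rewrite E dot0r in dvx; lra.
  exists (vscale (/ N x) x); split.
    have := normalize Lx Kx Nx0 => -[L' [K' _]].
    exact: (proj1 (proj2 (HM _) (conj L' (K_nonneg K')))).
  split; first by case: (normalize Lx Kx Nx0) => _ [K' _]; exact: K_nonneg.
  split; first by case: (normalize Lx Kx Nx0) => _ [_ ->].
  rewrite dot_scaler.
  have : 1 <= / N x by rewrite -Rinv_1; apply: Rinv_le_contravar.
  nra.
exists nu; split; last split.
-
  split; last first.
    move=> a [v [Kv [Nv [_ Ha]]]].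
    have [x [b [Lx [Nx [Hb nub]]]]] := lamD v Kv Nv.
    have : b <= a by apply: Ha; exists x; split => //; split.
    lra.
  exists us; split => //; split => //; split.
    have [x [b [Lx [Nx [Hb nub]]]]] := lamD us Kus Nus.
    exists x; split => //; split => //.
    suff -> : nu = b by [].
    by apply: Rle_antisym => //; apply: (ubus x).
  by move=> b [x [Lx [Nx Hb]]]; apply: (ubus x).
-
  split.
    have Hwl : forall x, Lp x -> dot us x <= nu * N x by move=> x Lx; apply: phi_sc.
    have [y [d [Vy [Hy [Hd dR]]]]] := nu_construct Kus (Rlt_le _ _ nu_pos) (Rle_refl 1) Hwl.
    have E1 : vscale (/ 1) us = us by apply: functional_extensionality => i; rewrite /vscale Rinv_1; ring.
    rewrite E1 in Hd.
    have : nu <= d.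
      case: (Pphi us) => [[x [[Lx Nx] Ex]] _].
      have := dual_ge Hd (Lp_V Lx); rewrite dot_subl (dot_sym y x) (Hy _ Lx) -Ex -/nu.
      have := dual_nonneg Hd; have := N_nonneg HN x; nra.
    move=> h; have -> : nu = d by lra.
    exists us, y; split; first exact: Kus. split; first exact: Vy. split; first exact: Hy. split; last exact: Hd.
    by have := dual2 (proj1 Kus); rewrite Nus.
  move=> a [u [y [Ku [Vy [Hy [Hu Ha]]]]]].
  have Nu : N u = 1 by rewrite (IsMax_unique Hu (dual2 (proj1 Ku))).
  have := Hus u (conj Ku Nu); rewrite -/nu.
  case: (Pphi u) => [[x [[Lx Nx] Ex]] _].
  have := dual_ge Ha (Lp_V Lx); rewrite dot_subl (dot_sym y x) (Hy _ Lx) -Ex.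
  have := dual_nonneg Ha; have := N_nonneg HN x; nra.
-
  split.
    exists us; split => //; split => //; split.
      have [x [Mx [nx [Nx Hx]]]] := helperR us Kus Nus.
      exists x; do !split => //.
      have Lx : Lp x by case: (proj1 (HM x) (conj Mx nx)).
      have := phi_sc us x Lx; rewrite Nx -/nu; lra.
    move=> b [x [Mx [nx [Nx ->]]]].
    have Lx : Lp x by case: (proj1 (HM x) (conj Mx nx)).
    have := phi_sc us x Lx; rewrite Nx -/nu; lra.
  move=> a [u [Ku [Nu Ha]]].
  have [x [Mx [nx [Nx Hx]]]] := helperR u Ku Nu.
  have : dot u x <= a by apply: (proj2 Ha); exists x.
  lra.
Qed.
End L2.

End Gen.


Lemma IsMax_ext (P Q : R -> Prop) r : (forall a, P a <-> Q a) -> IsMax P r -> IsMax Q r.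
Proof. move=> E [Pr H]; split; first exact/E. by move=> y /E; apply: H. Qed.
Lemma IsMin_ext (P Q : R -> Prop) r : (forall a, P a <-> Q a) -> IsMin P r -> IsMin Q r.
Proof. move=> E [Pr H]; split; first exact/E. by move=> y /E; apply: H. Qed.

Section Fin.
Variable n : nat.

Lemma sum_nonneg_zero (F : 'I_n -> R) : (forall i, 0 <= F i) -> \big[Rplus/0]_(i < n) F i = 0 -> forall i, F i = 0.
Proof. move=> H E i; have := sum_ge_one i H; rewrite E; have := H i; lra. Qed.

Lemma norm1_IsNorm : IsNorm (@norm_1 n).
Proof.
split; last split.
- move=> x E i; have := sum_nonneg_zero (fun i => Rabs_pos (x i)) E i.
  move=> h; case: (Rcase_abs (x i)) => h2; [rewrite Rabs_left in h|rewrite Rabs_right in h]; lra.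
- move=> c x; rewrite /norm_1 -sum_scale; apply: sum_ext => i; rewrite /vscale Rabs_mult //.
- move=> x y; rewrite /norm_1 -sum_add; apply: sum_le => i; rewrite /vadd; apply: Rabs_triang.
Qed.

Lemma norm2_sq (x : vec n) : norm_2 x * norm_2 x = dot x x.
Proof. rewrite /norm_2 sqrt_sqrt //; apply: sum_nonneg => i; nra. Qed.

Lemma norm2_zero (x : vec n) : norm_2 x = 0 -> forall i, x i = 0.
Proof.
move=> E i; have E2 : dot x x = 0 by rewrite -norm2_sq E; ring.
have := sum_nonneg_zero (F := fun i => x i * x i) (fun i => ltac:(nra)) E2 i; nra.
Qed.

Lemma norm2_scale c (x : vec n) : norm_2 (vscale c x) = Rabs c * norm_2 x.
Proof.
rewrite /norm_2; have -> : \big[Rplus/0]_(i < n) (vscale c x i * vscale c x i) = (c * c) * \big[Rplus/0]_(i < n) (x i * x i).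
  by rewrite -sum_scale; apply: sum_ext => i; rewrite /vscale; ring.
rewrite sqrt_mult; [|nra|apply: sum_nonneg => i; nra].
by rewrite -Rsqr_def (sqrt_Rsqr_abs c).
Qed.

Lemma norm2_nonneg (x : vec n) : 0 <= norm_2 x.
Proof. exact: sqrt_pos. Qed.

Lemma CS2 (x y : vec n) : dot x y <= norm_2 x * norm_2 y.
Proof.
case: (norm2_nonneg x) => ax; last first.
  have -> : x = @vzero n by apply: functional_extensionality => i; apply: norm2_zero; rewrite -ax.
  rewrite dot0l; have := norm2_nonneg y; have := norm2_nonneg (@vzero n); nra.
case: (norm2_nonneg y) => ay; last first.
  have -> : y = @vzero n by apply: functional_extensionality => i; apply: norm2_zero; rewrite -ay.
  rewrite dot0r; have := norm2_nonneg x; have := norm2_nonneg (@vzero n); nra.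
pose z := vsub (vscale (/ norm_2 x) x) (vscale (/ norm_2 y) y).
have := norm2_sq z; rewrite /z dot_sub_sub !dot_scalel !dot_scaler -!norm2_sq.
have h := Rmult_le_pos _ _ (norm2_nonneg z) (norm2_nonneg z).
rewrite /z => E; rewrite E in h.
have e1 : / norm_2 x * (/ norm_2 x * (norm_2 x * norm_2 x)) = 1 by field; lra.
have e2 : / norm_2 y * (/ norm_2 y * (norm_2 y * norm_2 y)) = 1 by field; lra.
rewrite e1 e2 in h.
have h2 : / norm_2 x * (/ norm_2 y * dot x y) <= 1 by lra.
have := Rmult_le_compat_l (norm_2 x * norm_2 y) _ _ (Rlt_le _ _ (Rmult_lt_0_compat _ _ ax ay)) h2.
have -> : norm_2 x * norm_2 y * (/ norm_2 x * (/ norm_2 y * dot x y)) = dot x y by field; lra.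
lra.
Qed.

Lemma norm2_IsNorm : IsNorm (@norm_2 n).
Proof.
split; last split.
- exact: norm2_zero.
- exact: norm2_scale.
- move=> x y.
  have h := norm2_sq (vadd x y); rewrite dot_addl !dot_addr (dot_sym y x) -!norm2_sq in h.
  have := CS2 x y; have := norm2_nonneg x; have := norm2_nonneg y; have := norm2_nonneg (vadd x y).
  nra.
Qed.
End Fin.

Lemma nI_scale n t (x : vec n) : norm_inf (vscale t x) = Rabs t * norm_inf x.
Proof.
apply: Rle_antisym.
  apply: nI_le; first by apply: Rmult_le_pos; [apply: Rabs_pos | apply: nI_pos].
  move=> i; rewrite /vscale Rabs_mult; apply: Rmult_le_compat_l; [apply: Rabs_pos | apply: nI_ge].
case: n x => [|n'] x.
  have -> : norm_inf x = 0 by rewrite /norm_inf big_ord0.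
  rewrite Rmult_0_r; apply: nI_pos.
have [i Hi] := nI_att ord0 x; rewrite Hi.
have := nI_ge (vscale t x) i; rewrite /vscale Rabs_mult //.
Qed.

Lemma sum_sub n (F G : 'I_n -> R) : \big[Rplus/0]_(i < n) F i - \big[Rplus/0]_(i < n) G i = \big[Rplus/0]_(i < n) (F i - G i).
Proof.
have := sum_add F (fun i => -1 * G i); rewrite sum_scale => E.
have -> : \big[Rplus/0]_(i < n) (F i - G i) = \big[Rplus/0]_(i < n) (F i + -1 * G i) by apply: sum_ext => i; ring.
rewrite E; ring.
Qed.

Lemma sum_abs n (F : 'I_n -> R) : Rabs (\big[Rplus/0]_(i < n) F i) <= \big[Rplus/0]_(i < n) Rabs (F i).
Proof.
apply: (big_ind2 (fun a b => Rabs a <= b)); first by rewrite Rabs_R0; lra.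
  move=> a b c e h1 h2; have := Rabs_triang a c; lra.
by move=> i _; lra.
Qed.

Section Span.
Variables (n m : nat) (b : 'I_m -> vec n).
Hypothesis Hind : forall c : 'I_m -> R, (forall i, lincomb c b i = 0) -> forall j, c j = 0.
Variable j0 : 'I_m.

Definition lc (c : vec m) : vec n := lincomb c b.
Definition Lb := \big[Rplus/0]_(i < n) \big[Rplus/0]_(j < m) Rabs (b j i).

Lemma lc_lip (c c' : vec m) d : 0 <= d -> (forall j, Rabs (c' j - c j) <= d) ->
  forall i, Rabs (lc c' i - lc c i) <= d * Lb.
Proof.
move=> d0 H i.
have h1 : Rabs (lc c' i - lc c i) <= d * \big[Rplus/0]_(j < m) Rabs (b j i).
  rewrite /lc /lincomb sum_sub -sum_scale.
  apply: (Rle_trans _ _ _ (sum_abs _)); apply: sum_le => j.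
  have -> : c' j * b j i - c j * b j i = (c' j - c j) * b j i by ring.
  rewrite Rabs_mult; apply: Rmult_le_compat_r; [apply: Rabs_pos | exact: H].
apply: (Rle_trans _ _ _ h1); apply: Rmult_le_compat_l => //.
exact: (@sum_ge_one n (fun i => \big[Rplus/0]_(j < m) Rabs (b j i)) i (fun k => sum_nonneg (fun j => Rabs_pos _))).
Qed.

Lemma Lb_pos : 0 <= Lb.
Proof. apply: sum_nonneg => i; apply: sum_nonneg => j; apply: Rabs_pos. Qed.

Lemma lc_scale t c : lc (vscale t c) = vscale t (lc c).
Proof.
apply: functional_extensionality => i; rewrite /lc /lincomb /vscale -sum_scale.
by apply: sum_ext => j; ring.
Qed.

Lemma lc_add c c' : lc (vadd c c') = vadd (lc c) (lc c').
Proof.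
apply: functional_extensionality => i; rewrite /lc /lincomb /vadd -sum_add.
by apply: sum_ext => j; ring.
Qed.

Lemma lc_kappa : exists k, 0 < k /\ forall c, k * norm_inf c <= norm_inf (lc c).
Proof.
have [c0 [Sc0 Hc0]] : exists c, norm_inf c = 1 /\ forall c', norm_inf c' = 1 -> norm_inf (lc c) <= norm_inf (lc c').
  apply: evt_min.
  - exists (unitv j0); apply: Rle_antisym.
      by apply: nI_le; [lra | move=> i; rewrite /unitv; case: (i == j0); rewrite ?Rabs_R1 ?Rabs_R0; lra].
    by have := nI_ge (unitv j0) j0; rewrite /unitv eqxx Rabs_R1.
  - by exists 1 => x Sx i; rewrite -Sx; apply: nI_ge.
  - by apply: closed_eq2; [apply: Lip_nI | apply: Lip_const].
  - exists Lb => x y d d0 H; rewrite Rmult_comm; apply: nI_lip; first by apply: Rmult_le_pos => //; exact: Lb_pos.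
    by apply: lc_lip.
have k0 : 0 < norm_inf (lc c0).
  case: (nI_pos (lc c0)) => // E; exfalso.
  have Z : forall i, lc c0 i = 0.
    move=> i; have := nI_ge (lc c0) i; rewrite -E => h; have := Rabs_pos (lc c0 i).
    move=> h2; case: (Rcase_abs (lc c0 i)) => h3; [rewrite Rabs_left in h|rewrite Rabs_right in h]; lra.
  have := Hind Z; move=> Hz.
  have := nI_le (x := c0) (Rle_refl 0) ltac:(by move=> j; rewrite Hz Rabs_R0; lra).
  lra.
exists (norm_inf (lc c0)); split => // c.
case: (nI_pos c) => Hc; last by rewrite -Hc Rmult_0_r; apply: nI_pos.
have := Hc0 (vscale (/ norm_inf c) c).
rewrite lc_scale !nI_scale Rabs_pos_eq; last by apply: Rlt_le; apply: Rinv_0_lt_compat.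
have -> : / norm_inf c * norm_inf c = 1 by field; lra.
move=> /(_ erefl) h.
have := Rmult_le_compat_l (norm_inf c) _ _ (Rlt_le _ _ Hc) h.
have -> : norm_inf c * (/ norm_inf c * norm_inf (lc c)) = norm_inf (lc c) by field; lra.
lra.
Qed.

Lemma span_closed : closedS (fun x => exists c, forall i, x i = lincomb c b i).
Proof.
move=> x Hx.
have [k [k0 Hk]] := lc_kappa.
pose Bc := (norm_inf x + 1) / k.
have Bc0 : 0 <= Bc by apply: Rmult_le_pos; [have := nI_pos x; lra | apply: Rlt_le; apply: Rinv_0_lt_compat].
pose Box := fun c : vec m => forall j, - Bc <= c j /\ c j <= Bc.
have inBox : forall y c, (forall i, y i = lincomb c b i) -> (forall i, Rabs (y i - x i) < 1) -> Box c.
  move=> y c Hy H1.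
  have : norm_inf (lc c) <= norm_inf x + 1.
    have -> : lc c = y by apply: functional_extensionality => i; rewrite Hy.
    have := nI_lip (x := x) (y := y) (d := 1) ltac:(lra) ltac:(by move=> i; apply: Rlt_le).
    move=> h; have := Rle_abs (norm_inf y - norm_inf x); lra.
  have := Hk c => h1 h2 j.
  have : norm_inf c <= Bc.
    rewrite /Bc; apply: (Rmult_le_reg_l k) => //; field_simplify; lra.
  have := nI_ge c j; move=> h3 h4; have := Rle_abs (c j); have := Rabs_Ropp (c j); have := Rle_abs (- c j); lra.
pose G := fun c => norm_inf (vsub (lc c) x).
have [cs [Bcs Hcs]] : exists c, Box c /\ forall c', Box c' -> G c <= G c'.
  apply: evt_min.
  - exists (@vzero m) => j; rewrite /vzero; lra.
  - exists Bc => c Hc j; have := Hc j; move=> [h1 h2]; apply: Rabs_le; lra.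
  - apply: closed_all => j; apply: closed_and; apply: closed_le2; (try exact: Lip_const); exact: Lip_coord.
  - exists Lb => c c' d d0 H; rewrite Rmult_comm; apply: nI_lip; first by apply: Rmult_le_pos => //; exact: Lb_pos.
    move=> i; rewrite /vsub.
    have -> : lc c' i - x i - (lc c i - x i) = lc c' i - lc c i by ring.
    by apply: lc_lip.
have G0 : G cs <= 0.
  apply: Rnot_lt_le => h.
  have e0 : 0 < Rmin (G cs / 2) 1 by apply: Rmin_pos; lra.
  have [y [[c Hy] Hyx]] := Hx _ e0.
  have Bc' : Box c by apply: (inBox y) => // i; have := Hyx i; have := Rmin_r (G cs / 2) 1; lra.
  have := Hcs _ Bc'.
  have : G c <= Rmin (G cs / 2) 1.
    apply: nI_le; first lra.
    move=> i; rewrite /vsub (_ : lc c i = y i); last by rewrite Hy.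
    by apply: Rlt_le; apply: Hyx.
  have := Rmin_l (G cs / 2) 1; lra.
exists cs => i.
have := nI_ge (vsub (lc cs) x) i; rewrite -/(G cs) /vsub => h.
have := Rabs_pos (lc cs i - x i) => h2.
have E : lc cs i - x i = 0.
  case: (Rcase_abs (lc cs i - x i)) => h3; [rewrite Rabs_left in h|rewrite Rabs_right in h]; lra.
rewrite /lc in E; lra.
Qed.
End Span.


Lemma side (n : nat) (C : 'I_n -> Prop) (Lp M : vec n -> Prop) (p : vec n) :
  (exists i, C i) ->
  (forall x y, Lp x -> Lp y -> Lp (vadd x y)) ->
  (forall c x, Lp x -> Lp (vscale c x)) ->
  (forall x, Lp x -> Vcoord C x) -> closedS Lp -> Lp p -> (forall i, C i -> 0 < p i) ->
  (forall x, M x /\ Defs.nonneg x <-> Lp x /\ Defs.nonneg x) ->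
  (forall Nn, IsNorm Nn -> exists r,
     SigmaIs (Kcoord C) Lp Nn (@norm_inf n) r /\ NuIs (Vcoord C) (Kcoord C) Lp Nn (@norm_inf n) r /\
     RhsMaxMin M C Nn r) /\
  (exists r, SigmaIs (Kcoord C) Lp (@norm_1 n) (@norm_inf n) r /\
     NuIs (Vcoord C) (Kcoord C) Lp (@norm_1 n) (@norm_inf n) r /\ RhsMaxMinSimplex M C r) /\
  (forall Nn, IsNorm Nn -> exists r,
     SigmaIs (Kcoord C) Lp Nn (@norm_1 n) r /\ NuIs (Vcoord C) (Kcoord C) Lp Nn (@norm_1 n) r /\
     RhsMinMax M C Nn r) /\
  (exists r, SigmaIs (Kcoord C) Lp (@norm_1 n) (@norm_1 n) r /\
     NuIs (Vcoord C) (Kcoord C) Lp (@norm_1 n) (@norm_1 n) r /\ RhsMinMaxSimplex M C r) /\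
  (exists r, SigmaIs (Kcoord C) Lp (@norm_2 n) (@norm_2 n) r /\
     NuIs (Vcoord C) (Kcoord C) Lp (@norm_2 n) (@norm_2 n) r /\ RhsL2 M C r).
Proof.
move=> [i0 Ci0] Ladd Lsc LV Lcl Lp_p ppos HM.
have simp : forall x, Defs.nonneg x /\ norm_1 x = 1 <-> simplex x.
  move=> x; split.
    move=> [nx Nx]; split => //; rewrite -Nx; apply: sum_ext => i; rewrite Rabs_pos_eq //.
  move=> [nx Sx]; split => //; rewrite -Sx; apply: sum_ext => i; rewrite Rabs_pos_eq //.
split; last split; last split; last split.
- move=> Nn HNn; exact: (gen_a HNn Ci0 Ladd Lsc LV Lcl Lp_p ppos HM).
- have [r [H1 [H2 H3]]] := gen_a (norm1_IsNorm n) Ci0 Ladd Lsc LV Lcl Lp_p ppos HM.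
  exists r; split => //; split => //.
  apply: IsMax_ext H3 => a; split.
    by move=> [x [Mx [nx [Nx H]]]]; exists x; split => //; split => //; apply/simp.
  by move=> [x [Mx [/simp [nx Nx] H]]]; exists x.
- move=> Nn HNn; exact: (gen_b HNn Ci0 Ladd Lsc LV Lcl Lp_p ppos HM).
- have [r [H1 [H2 H3]]] := gen_b (norm1_IsNorm n) Ci0 Ladd Lsc LV Lcl Lp_p ppos HM.
  exists r; split => //; split => //.
  apply: IsMin_ext H3 => a; split.
    move=> [i [Ci H]]; exists i; split => //; apply: IsMax_ext H => b; split.
      by move=> [x [Mx [nx [Nx ->]]]]; exists x; split => //; split => //; apply/simp.
    by move=> [x [Mx [/simp [nx Nx] ->]]]; exists x.
  move=> [i [Ci H]]; exists i; split => //; apply: IsMax_ext H => b; split.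
    by move=> [x [Mx [/simp [nx Nx] ->]]]; exists x.
  by move=> [x [Mx [nx [Nx ->]]]]; exists x; split => //; split => //; apply/simp.
- exact: (gen_c (norm2_IsNorm n) Ci0 Ladd Lsc LV Lcl Lp_p ppos (fun x => erefl) HM).
Qed.


Lemma term_zero n (a b : vec n) : Defs.nonneg a -> Defs.nonneg b -> dot a b = 0 -> forall i, 0 < b i -> a i = 0.
Proof.
move=> na nb E i bi.
have := sum_nonneg_zero (F := fun k => a k * b k) (fun k => Rmult_le_pos _ _ (na k) (nb k)) E i.
move=> h; have := na i; nra.
Qed.

Theorem mainTheorem15 (n m : nat) (L : vec n -> Prop) (B : 'I_n -> Prop) :
  (1 <= m)%N -> (m < n)%N -> InGr L m -> GoldmanTucker L B ->
  (* (a) |||.||| = ||.||_inf *)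
  ((forall Nn : vec n -> R, IsNorm Nn ->
     ((exists i, B i) -> exists r,
        SigmaIs (Kcoord B) (LB L B) Nn (@norm_inf n) r /\
        NuIs (Vcoord B) (Kcoord B) (LB L B) Nn (@norm_inf n) r /\
        RhsMaxMin L B Nn r) /\
     ((exists i, ~ B i) -> exists r,
        SigmaIs (Kcoord (compl B)) (LN L B) Nn (@norm_inf n) r /\
        NuIs (Vcoord (compl B)) (Kcoord (compl B)) (LN L B) Nn (@norm_inf n) r /\
        RhsMaxMin (perp L) (compl B) Nn r)) /\
   ((exists i, B i) -> exists r,
        SigmaIs (Kcoord B) (LB L B) (@norm_1 n) (@norm_inf n) r /\
        NuIs (Vcoord B) (Kcoord B) (LB L B) (@norm_1 n) (@norm_inf n) r /\
        RhsMaxMinSimplex L B r) /\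
   ((exists i, ~ B i) -> exists r,
        SigmaIs (Kcoord (compl B)) (LN L B) (@norm_1 n) (@norm_inf n) r /\
        NuIs (Vcoord (compl B)) (Kcoord (compl B)) (LN L B) (@norm_1 n) (@norm_inf n) r /\
        RhsMaxMinSimplex (perp L) (compl B) r)) /\
  (* (b) |||.||| = ||.||_1 *)
  ((forall Nn : vec n -> R, IsNorm Nn ->
     ((exists i, B i) -> exists r,
        SigmaIs (Kcoord B) (LB L B) Nn (@norm_1 n) r /\
        NuIs (Vcoord B) (Kcoord B) (LB L B) Nn (@norm_1 n) r /\
        RhsMinMax L B Nn r) /\
     ((exists i, ~ B i) -> exists r,
        SigmaIs (Kcoord (compl B)) (LN L B) Nn (@norm_1 n) r /\
        NuIs (Vcoord (compl B)) (Kcoord (compl B)) (LN L B) Nn (@norm_1 n) r /\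
        RhsMinMax (perp L) (compl B) Nn r)) /\
   ((exists i, B i) -> exists r,
        SigmaIs (Kcoord B) (LB L B) (@norm_1 n) (@norm_1 n) r /\
        NuIs (Vcoord B) (Kcoord B) (LB L B) (@norm_1 n) (@norm_1 n) r /\
        RhsMinMaxSimplex L B r) /\
   ((exists i, ~ B i) -> exists r,
        SigmaIs (Kcoord (compl B)) (LN L B) (@norm_1 n) (@norm_1 n) r /\
        NuIs (Vcoord (compl B)) (Kcoord (compl B)) (LN L B) (@norm_1 n) (@norm_1 n) r /\
        RhsMinMaxSimplex (perp L) (compl B) r)) /\
  (* (c) ||.|| = |||.||| = ||.||_2 *)
  (((exists i, B i) -> exists r,
        SigmaIs (Kcoord B) (LB L B) (@norm_2 n) (@norm_2 n) r /\
        NuIs (Vcoord B) (Kcoord B) (LB L B) (@norm_2 n) (@norm_2 n) r /\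
        RhsL2 L B r) /\
   ((exists i, ~ B i) -> exists r,
        SigmaIs (Kcoord (compl B)) (LN L B) (@norm_2 n) (@norm_2 n) r /\
        NuIs (Vcoord (compl B)) (Kcoord (compl B)) (LN L B) (@norm_2 n) (@norm_2 n) r /\
        RhsL2 (perp L) (compl B) r)).
Proof.
move=> m1 mn [b [Hind HL]] [[xg [Lxg Hxg]] [yg [Pyg Hyg]]].
have j0 : 'I_m by exact: (Ordinal m1).
have Ladd : forall x y, L x -> L y -> L (vadd x y).
  move=> x y /HL [c Hc] /HL [c' Hc']; apply/HL; exists (vadd c c') => i.
  rewrite /vadd Hc Hc' /lincomb -sum_add; apply: sum_ext => j; rewrite /vadd; ring.
have Lsc : forall c x, L x -> L (vscale c x).
  move=> k x /HL [c Hc]; apply/HL; exists (vscale k c) => i.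
  rewrite /vscale Hc /lincomb -sum_scale; apply: sum_ext => j; rewrite /vscale; ring.
have Lcl : closedS L.
  apply: closed_ext (span_closed Hind j0) => x; split; [by move/HL | by move=> H; apply/HL].
have Padd : forall x y, perp L x -> perp L y -> perp L (vadd x y).
  by move=> x y Px Py z Lz; rewrite dot_addr Px // Py //; ring.
have Psc : forall c x, perp L x -> perp L (vscale c x).
  by move=> c x Px z Lz; rewrite dot_scaler Px //; ring.
have Pcl : closedS (perp L).
  apply: closed_all => z; apply: closed_imp; apply: closed_eq2; [exact: Lip_dot | exact: Lip_const].
have nxg : Defs.nonneg xg.
  move=> i; case: (classic (B i)) => Bi; [have := proj1 (Hxg i) Bi; lra | rewrite (proj2 (Hxg i) Bi); lra].
have nyg : Defs.nonneg yg.
  move=> i; case: (classic (B i)) => Bi; [rewrite (proj1 (Hyg i) Bi); lra | have := proj2 (Hyg i) Bi; lra].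
have LBadd : forall x y, LB L B x -> LB L B y -> LB L B (vadd x y).
  move=> x y [Lx Vx] [Ly Vy]; split; first exact: Ladd.
  by move=> i nB; rewrite /vadd Vx // Vy //; ring.
have LBsc : forall c x, LB L B x -> LB L B (vscale c x).
  move=> c x [Lx Vx]; split; first exact: Lsc.
  by move=> i nB; rewrite /vscale Vx //; ring.
have LBV : forall x, LB L B x -> Vcoord B x by move=> x [].
have LBcl : closedS (LB L B) by apply: closed_and => //; exact: (@V_closed n B).
have LBp : LB L B xg by split => // i nB; exact: (proj2 (Hxg i) nB).
have LBpos : forall i, B i -> 0 < xg i by move=> i Bi; exact: (proj1 (Hxg i) Bi).
have HMB : forall x, L x /\ Defs.nonneg x <-> LB L B x /\ Defs.nonneg x.
  move=> x; split; last by case=> [[? ?] ?].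
  move=> [Lx nx]; split => //; split => // i nB.
  apply: (term_zero nx nyg (Pyg _ Lx)); exact: (proj2 (Hyg i) nB).
have SB := fun h : (exists i, B i) => side h LBadd LBsc LBV LBcl LBp LBpos HMB.
have VN : Vcoord (compl B) yg.
  by move=> i nnB; apply: (proj1 (Hyg i)); apply: NNPP.
have LNadd : forall x y, LN L B x -> LN L B y -> LN L B (vadd x y).
  move=> x y [Lx Vx] [Ly Vy]; split; first exact: Padd.
  by move=> i nB; rewrite /vadd Vx // Vy //; ring.
have LNsc : forall c x, LN L B x -> LN L B (vscale c x).
  move=> c x [Lx Vx]; split; first exact: Psc.
  by move=> i nB; rewrite /vscale Vx //; ring.
have LNV : forall x, LN L B x -> Vcoord (compl B) x by move=> x [].
have LNcl : closedS (LN L B) by apply: closed_and => //; exact: (@V_closed n (compl B)).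
have LNp : LN L B yg by split.
have LNpos : forall i, compl B i -> 0 < yg i by move=> i nBi; exact: (proj2 (Hyg i) nBi).
have HMN : forall x, perp L x /\ Defs.nonneg x <-> LN L B x /\ Defs.nonneg x.
  move=> x; split; last by case=> [[? ?] ?].
  move=> [Px nx]; split => //; split => // i nnB.
  have Bi : B i by apply: NNPP.
  apply: (term_zero nx nxg); last exact: (proj1 (Hxg i) Bi).
  rewrite dot_sym; exact: Px.
have SN := fun h : (exists i, compl B i) => side h LNadd LNsc LNV LNcl LNp LNpos HMN.
split; last split.
- split.
    move=> Nn HNn; split.
      by move=> h; have [H _] := SB h; exact: H.
    by move=> h; have [H _] := SN h; exact: H.
  split.
    by move=> h; have [_ [H _]] := SB h; exact: H.
  by move=> h; have [_ [H _]] := SN h; exact: H.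
- split.
    move=> Nn HNn; split.
      by move=> h; have [_ [_ [H _]]] := SB h; exact: H.
    by move=> h; have [_ [_ [H _]]] := SN h; exact: H.
  split.
    by move=> h; have [_ [_ [_ [H _]]]] := SB h; exact: H.
  by move=> h; have [_ [_ [_ [H _]]]] := SN h; exact: H.
- split.
    by move=> h; have [_ [_ [_ [_ H]]]] := SB h; exact: H.
  by move=> h; have [_ [_ [_ [_ H]]]] := SN h; exact: H.
Qed.
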